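(* Let $n\ge 2$ be an integer, $k,c_b>0$, $\rho_0>0$, and let $\lambda_{1,0},\dots,\lambda_{n,0}$ be real numbers with $\lambda_{1,0}=\cdots=\lambda_{J,0}<\lambda_{J+1,0}\le\cdots\le\lambda_{n,0}$ for some integer $1\le J\le n$. Consider the system $$\lambda_i'=-\lambda_i^2+\frac{k}{n}(\rho-c_b)\ (i=1,\dots,n),\qquad \rho'=-\rho\lambda,\quad \lambda=\sum_{i=1}^n\lambda_i,\qquad \rho(0)=\rho_0,\ \lambda_i(0)=\lambda_{i,0},$$ suppose its maximal interval of existence is $[0,t_B)$ with $0<t_B<\infty$, and let $u_i(t)=e^{\int_0^t\lambda_i(s)\,ds}$. Then for every $J<j\le n$ the functions $u_1'u_j$ and $u_1u_j'$ are bounded on $[0,t_B)$, and $\lim_{t\to t_B^-}u_1(t)u_j(t)=0$.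
   Context: Solutions are real-valued and continuously differentiable on $[0,t_B)$. *)

(* Defs.v *)
From Stdlib Require Import Reals.
From Coquelicot Require Import Coquelicot.
Open Scope R_scope.

(* Indices of lambda run over 1..n (lam : nat -> R -> R; values at other indices irrelevant). *)
Definition lam_sum (n : nat) (lam : nat -> R -> R) (t : R) : R :=
  sum_f_R0 (fun i => lam (S i) t) (pred n).

Definition is_sol (n : nat) (k cb rho0 : R) (lam0 : nat -> R) (T : R)
    (lam : nat -> R -> R) (rho : R -> R) : Prop :=
  rho 0 = rho0 /\
  (forall i, (1 <= i <= n)%nat -> lam i 0 = lam0 i) /\
  filterlim rho (at_right 0) (locally rho0) /\
  (forall i, (1 <= i <= n)%nat -> filterlim (lam i) (at_right 0) (locally (lam0 i))) /\
  (forall t, 0 < t < T ->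
     (forall i, (1 <= i <= n)%nat ->
        is_derive (lam i) t (- (lam i t) ^ 2 + k / INR n * (rho t - cb))) /\
     is_derive rho t (- rho t * lam_sum n lam t)).

Definition maximal_sol (n : nat) (k cb rho0 : R) (lam0 : nat -> R) (tB : R)
    (lam : nat -> R -> R) (rho : R -> R) : Prop :=
  is_sol n k cb rho0 lam0 tB lam rho /\
  forall T, tB < T ->
    ~ (exists (lam' : nat -> R -> R) (rho' : R -> R),
          is_sol n k cb rho0 lam0 T lam' rho' /\
          forall t, 0 <= t < tB ->
            rho' t = rho t /\ forall i, (1 <= i <= n)%nat -> lam' i t = lam i t).

Definition u (lam : nat -> R -> R) (i : nat) (t : R) : R :=
  exp (RInt (lam i) 0 t).

Definition bounded_on_0_tB (tB : R) (f : R -> R) : Prop :=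
  exists M, forall t, 0 <= t < tB -> Rabs (f t) <= M.

(* Main.v *)
Require Import Defs.
From Stdlib Require Import Reals Lra Lia Psatz Classical.
From Coquelicot Require Import Coquelicot.
Open Scope R_scope.

Lemma is_derive_cont (f : R -> R) x l : is_derive f x l -> continuous f x.
Proof. intros H. exact (@ex_derive_continuous R_AbsRing R_NormedModule f x (ex_intro _ l H)). Qed.

Lemma cont_eps (f : R -> R) c : continuous f c -> forall eps, 0 < eps ->
  exists del, 0 < del /\ forall y, Rabs (y - c) < del -> Rabs (f y - f c) < eps.
Proof.
  intros H eps He.
  destruct (proj1 (filterlim_locally f (f c)) H (mkposreal eps He)) as [d Hd].
  exists d. split. apply cond_pos. intros y Hy. apply (Hd y). exact Hy.
Qed.

Lemma eps_cont (f : R -> R) c : (forall eps, 0 < eps ->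
  exists del, 0 < del /\ forall y, Rabs (y - c) < del -> Rabs (f y - f c) < eps) -> continuous f c.
Proof.
  intros H. apply (proj2 (filterlim_locally f (f c))). intros eps.
  destruct (H eps (cond_pos eps)) as [d [Hd Hd2]].
  exists (mkposreal d Hd). intros y Hy. apply Hd2. exact Hy.
Qed.

Lemma mono_le (f df : R -> R) a b : a <= b ->
  (forall x, a <= x <= b -> is_derive f x (df x)) ->
  (forall x, a < x < b -> 0 <= df x) -> f a <= f b.
Proof.
  intros Hab Hd Hp. destruct (Req_dec a b) as [->|Hne]; [lra|].
  assert (Hlt: a < b) by lra.
  destruct (MVT_cor2 f df a b Hlt) as [c [Hc1 Hc2]].
  { intros c Hc. apply is_derive_Reals. apply Hd; lra. }
  specialize (Hp c Hc2). nra.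
Qed.

Lemma const_on (f df : R -> R) a b : a <= b ->
  (forall x, a <= x <= b -> is_derive f x (df x)) ->
  (forall x, a < x < b -> df x = 0) -> f a = f b.
Proof.
  intros Hab Hd Hz. apply Rle_antisym.
  - apply (mono_le f df a b Hab Hd). intros x Hx. rewrite Hz; lra.
  - assert (H := mono_le (fun x => - f x) (fun x => - df x) a b Hab).
    cut (- f a <= - f b). lra. apply H.
    + intros x Hx. apply (is_derive_opp f x (df x)). auto.
    + intros x Hx. rewrite Hz; lra.
Qed.

Lemma barrier (f df : R -> R) a b m : a <= b ->
  (forall x, a <= x <= b -> is_derive f x (df x)) ->
  (forall x, a < x < b -> f x < m -> 0 <= df x) ->
  m <= f a -> forall x, a <= x <= b -> m <= f x.
Proof.
  intros Hab Hd Hp Ha x Hx.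
  destruct (Rle_or_lt m (f x)) as [H|Hfx]; [exact H|exfalso].
  set (E := fun y => a <= y <= x /\ m <= f y).
  assert (Hb : bound E). { exists x. intros y [Hy _]. lra. }
  assert (Hne : exists y, E y). { exists a. split; lra. }
  destruct (completeness E Hb Hne) as [c [Hub Hlub]].
  assert (Hac : a <= c). { apply Hub. split; lra. }
  assert (Hcx : c <= x). { apply Hlub. intros y [Hy _]. lra. }
  assert (Hfc : m <= f c).
  { destruct (Rle_or_lt m (f c)) as [H|H]; [exact H|exfalso].
    destruct (Req_dec c a) as [Hca|Hca]. { subst c. lra. }
    assert (Hcont := is_derive_cont f c _ (Hd c ltac:(lra))).
    destruct (cont_eps f c Hcont (m - f c) ltac:(lra)) as [d [Hd0 Hd1]].
    assert (c <= c - d/2).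
    { apply Hlub. intros y [Hy1 Hy2].
      destruct (Rle_or_lt y (c - d/2)) as [H'|H']; [exact H'|].
      assert (y <= c) by (apply Hub; split; auto).
      assert (Rabs (f y - f c) < m - f c) by (apply Hd1; apply Rabs_def1; lra).
      apply Rabs_def2 in H1. lra. }
    lra. }
  assert (Hcx' : c < x). { destruct (Req_dec c x) as [->|]; lra. }
  assert (Hlt : forall y, c < y <= x -> f y < m).
  { intros y Hy. destruct (Rle_or_lt m (f y)) as [H|H]; [|exact H].
    assert (y <= c) by (apply Hub; split; [lra|exact H]). lra. }
  assert (f c <= f x).
  { apply (mono_le f df c x). lra. intros z Hz. apply Hd; lra.
    intros z Hz. apply Hp. lra. apply Hlt. lra. }
  lra.
Qed.

Lemma abs_le_inv x B : Rabs x <= B -> -B <= x <= B.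
Proof. unfold Rabs. destruct (Rcase_abs x); lra. Qed.

Lemma pow_le1' (q : R) k : 0 <= q <= 1 -> q ^ k <= 1.
Proof. intros Hq. induction k; simpl. lra. assert (0 <= q ^ k) by (apply pow_le; lra). nra. Qed.

Lemma abs_lt_inv x B : Rabs x < B -> -B < x < B.
Proof. unfold Rabs. destruct (Rcase_abs x); lra. Qed.

Lemma zero_of_eps a : (forall eps, 0 < eps -> Rabs a <= eps) -> a = 0.
Proof.
  intros H. destruct (Req_dec a 0); auto. exfalso. assert (0 < Rabs a) by (apply Rabs_pos_lt; auto).
  specialize (H (Rabs a / 2) ltac:(lra)). lra.
Qed.

Lemma dplus (f g : R -> R) x df dg : is_derive f x df -> is_derive g x dg ->
  is_derive (fun t => f t + g t) x (df + dg).
Proof. intros H1 H2. exact (is_derive_plus f g x df dg H1 H2). Qed.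

Lemma dminus (f g : R -> R) x df dg : is_derive f x df -> is_derive g x dg ->
  is_derive (fun t => f t - g t) x (df - dg).
Proof. intros H1 H2. exact (is_derive_minus f g x df dg H1 H2). Qed.

Lemma dmult (f g : R -> R) x df dg : is_derive f x df -> is_derive g x dg ->
  is_derive (fun t => f t * g t) x (df * g x + f x * dg).
Proof. intros H1 H2. exact (is_derive_mult f g x df dg H1 H2 Rmult_comm). Qed.

Lemma dexp (f : R -> R) x df : is_derive f x df ->
  is_derive (fun t => exp (f t)) x (df * exp (f x)).
Proof. intros H. apply (is_derive_comp exp f x (exp (f x)) df).
  apply is_derive_Reals. apply derivable_pt_lim_exp. exact H. Qed.

Lemma dconst (c x : R) : is_derive (fun _ => c) x 0.
Proof. exact (is_derive_const c x). Qed.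

Lemma did (x : R) : is_derive (fun t => t) x 1.
Proof. exact (is_derive_id x). Qed.

Lemma dext (f : R -> R) (x l l' : R) : is_derive f x l -> l = l' -> is_derive f x l'.
Proof. intros H ->; exact H. Qed.

Lemma RInt_abs_bound (f : R -> R) a b M : ex_RInt f a b ->
  (forall z, Rmin a b <= z <= Rmax a b -> Rabs (f z) <= M) ->
  Rabs (RInt f a b) <= M * Rabs (b - a).
Proof.
  intros Hex Hb. destruct (Rle_or_lt a b) as [H|H].
  - rewrite Rmin_left, Rmax_right in Hb by lra.
    rewrite (Rabs_right (b - a)) by lra. rewrite Rmult_comm. apply abs_RInt_le_const; auto.
  - rewrite Rmin_right, Rmax_left in Hb by lra.
    rewrite <- (opp_RInt_swap f b a) by (apply ex_RInt_swap; exact Hex).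
    unfold opp; simpl. rewrite Rabs_Ropp.
    rewrite (Rabs_left (b - a)) by lra. replace (- (b - a)) with (a - b) by ring.
    rewrite Rmult_comm. apply abs_RInt_le_const; auto. lra. apply ex_RInt_swap; auto.
Qed.

Lemma RInt_diff (f : R -> R) s t t' : ex_RInt f s t -> ex_RInt f s t' ->
  RInt f s t - RInt f s t' = RInt f t' t.
Proof.
  intros H1 H2. assert (H3 : ex_RInt f t' s) by (apply ex_RInt_swap; auto).
  rewrite <- (RInt_Chasles f t' s t H3 H1). rewrite <- (opp_RInt_swap f s t' H2).
  unfold plus, opp; simpl. ring.
Qed.

Lemma RInt_minus' (f g : R -> R) a b : ex_RInt f a b -> ex_RInt g a b ->
  RInt (fun x => f x - g x) a b = RInt f a b - RInt g a b.
Proof. intros H1 H2. exact (RInt_minus f g a b H1 H2). Qed.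

Definition nrm (d : nat) (v : nat -> R) : R := sum_f_R0 (fun i => Rabs (v i)) d.
Definition vsub (v w : nat -> R) : nat -> R := fun i => v i - w i.

Lemma nrm_nonneg d v : 0 <= nrm d v.
Proof. unfold nrm. induction d; simpl. apply Rabs_pos. pose proof (Rabs_pos (v (S d))). lra. Qed.

Lemma comp_le_nrm d v i : (i <= d)%nat -> Rabs (v i) <= nrm d v.
Proof.
  unfold nrm. induction d; intros Hi.
  - replace i with 0%nat by lia. simpl. lra.
  - simpl. destruct (Nat.eq_dec i (S d)) as [->|Hne].
    + pose proof (nrm_nonneg d v). unfold nrm in H. lra.
    + pose proof (IHd ltac:(lia)). pose proof (Rabs_pos (v (S d))). lra.
Qed.

Lemma nrm_le_const d v B : (forall i, (i <= d)%nat -> Rabs (v i) <= B) -> nrm d v <= INR (S d) * B.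
Proof.
  unfold nrm. induction d; intros H.
  - simpl. rewrite Rmult_1_l. apply H. lia.
  - simpl sum_f_R0. rewrite S_INR. specialize (IHd (fun i Hi => H i ltac:(lia))).
    pose proof (H (S d) ltac:(lia)). lra.
Qed.

Lemma geom_small (q C eps : R) : 0 <= q < 1 -> 0 < eps -> exists m : nat, C * q ^ m < eps.
Proof.
  intros Hq He. destruct (Rle_or_lt C 0) as [HC|HC].
  - exists 0%nat. simpl. lra.
  - destruct (pow_lt_1_zero q ltac:(rewrite Rabs_right; lra) (eps / C) ltac:(apply Rdiv_lt_0_compat; lra)) as [N HN].
    exists N. specialize (HN N (le_n _)). rewrite Rabs_right in HN by (apply Rle_ge, pow_le; lra).
    apply (Rmult_lt_compat_l C) in HN; auto. replace (C * (eps / C)) with eps in HN by (field; lra). exact HN.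
Qed.

Lemma zero_of_geom (a K q : R) : 0 <= q < 1 -> (forall m, Rabs a <= K * q ^ m) -> a = 0.
Proof.
  intros Hq H. destruct (Req_dec a 0) as [|Hne]; auto. exfalso.
  assert (Ha : 0 < Rabs a) by (apply Rabs_pos_lt; auto).
  destruct (geom_small q K (Rabs a) Hq Ha) as [m Hm]. specialize (H m). lra.
Qed.

Lemma le_of_geom (a b K q : R) : 0 <= q < 1 -> (forall m, a <= b + K * q ^ m) -> a <= b.
Proof.
  intros Hq H. apply Rle_plus_epsilon. intros eps He.
  destruct (geom_small q K eps Hq He) as [m Hm]. specialize (H m). lra.
Qed.

Lemma lim_bound (u : nat -> R) (C q : R) : 0 <= q <= 1/2 ->
  (forall m, Rabs (u (S m) - u m) <= C * q ^ m) ->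
  forall m, Rabs (real (Lim_seq u) - u m) <= 2 * C * q ^ m.
Proof.
  intros Hq Hs.
  assert (HC : 0 <= C). { specialize (Hs 0%nat). simpl in Hs. pose proof (Rabs_pos (u 1%nat - u 0%nat)). lra. }
  assert (Hp : forall m p, Rabs (u (m + p)%nat - u m) <= 2 * C * q ^ m * (1 - (1/2) ^ p)).
  { intros m p. induction p.
    - rewrite Nat.add_0_r. simpl. rewrite Rminus_diag, Rabs_R0. lra.
    - replace (m + S p)%nat with (S (m + p)) by lia.
      pose proof (Hs (m + p)%nat) as H1. rewrite pow_add in H1.
      assert (q ^ p <= (1/2) ^ p) by (apply pow_incr; lra).
      assert (0 <= q ^ m) by (apply pow_le; lra).
      assert (C * (q ^ m * q ^ p) <= C * q ^ m * (1/2) ^ p) by (rewrite <- Rmult_assoc; apply Rmult_le_compat_l; [apply Rmult_le_pos|]; auto).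
      replace (u (S (m + p)) - u m) with ((u (S (m+p)) - u (m+p)%nat) + (u (m+p)%nat - u m)) by ring.
      eapply Rle_trans. apply Rabs_triang. simpl pow. lra. }
  assert (Hp' : forall m p, Rabs (u (m + p)%nat - u m) <= 2 * C * q ^ m).
  { intros m p. eapply Rle_trans. apply Hp. assert (0 <= (1/2)^p) by (apply pow_le; lra).
    assert (0 <= 2 * C * q ^ m) by (apply Rmult_le_pos; [lra|apply pow_le; lra]). nra. }
  assert (Hcv : ex_finite_lim_seq u).
  { apply ex_lim_seq_cauchy_corr. intros eps.
    destruct (geom_small q (4 * C) eps ltac:(lra) (cond_pos eps)) as [N HN].
    exists N. intros a b Ha Hb.
    pose proof (Hp' N (a - N)%nat). pose proof (Hp' N (b - N)%nat).
    replace (N + (a - N))%nat with a in H by lia. replace (N + (b - N))%nat with b in H0 by lia.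
    replace (u a - u b) with ((u a - u N) - (u b - u N)) by ring.
    eapply Rle_lt_trans. apply Rabs_triang. rewrite Rabs_Ropp. lra. }
  destruct Hcv as [l Hl]. rewrite (is_lim_seq_unique u l Hl). simpl.
  intros m. apply Rle_plus_epsilon. intros eps He.
  apply is_lim_seq_spec in Hl. destruct (Hl (mkposreal eps He)) as [N HN]. simpl in HN.
  specialize (HN (m + N)%nat ltac:(lia)). specialize (Hp' m N).
  replace (l - u m) with ((u (m + N)%nat - u m) - (u (m+N)%nat - l)) by ring.
  eapply Rle_trans. apply Rabs_triang. rewrite Rabs_Ropp. lra.
Qed.

Lemma ex_RInt_cont (f : R -> R) a b : (forall z, Rmin a b <= z <= Rmax a b -> continuous f z) -> ex_RInt f a b.
Proof. intros H. exact (@ex_RInt_continuous R_CompleteNormedModule f a b H). Qed.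

Lemma RInt_correct' (f : R -> R) a b : ex_RInt f a b -> is_RInt f a b (RInt f a b).
Proof. intros H. exact (@RInt_correct R_CompleteNormedModule f a b H). Qed.

Lemma add_sub_l (x y : R) : x + y - x = y.
Proof. ring. Qed.
Lemma add_sub_add (x y z : R) : x + y - (x + z) = y - z.
Proof. ring. Qed.

Lemma in_between a b s t z : a < s < b -> a < t < b -> Rmin s t <= z <= Rmax s t -> a < z < b.
Proof. intros H1 H2 H3. unfold Rmin, Rmax in H3. destruct (Rle_dec s t); lra. Qed.

Ltac ib := match goal with H: Rmin ?s ?t <= ?z <= Rmax ?s ?t, H1 : ?a < ?s < ?b, H2 : ?a < ?t < ?b |- ?a < ?z < ?b => exact (in_between a b s t z H1 H2 H) end.

Lemma int_facts (f : R -> R) s a b M : (forall z, a < z < b -> continuous f z) ->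
  (forall z, a < z < b -> Rabs (f z) <= M) -> a < s < b ->
  forall t, a < t < b -> ex_RInt f s t /\ Rabs (RInt f s t) <= M * Rabs (t - s) /\
     is_derive (fun t => RInt f s t) t (f t).
Proof.
  intros Hc Hb Hs.
  assert (Hex : forall t, a < t < b -> ex_RInt f s t).
  { intros t Ht. apply ex_RInt_cont. intros z Hz. apply Hc. ib. }
  intros t Ht. split; [auto|split].
  - apply RInt_abs_bound. auto. intros z Hz. apply Hb. ib.
  - apply (is_derive_RInt f (fun t => RInt f s t) s t). 
    + assert (Hd : 0 < Rmin (t - a) (b - t)) by (apply Rmin_pos; lra).
      exists (mkposreal _ Hd). intros y Hy. apply RInt_correct'. apply Hex.
      change (Rabs (y - t) < Rmin (t - a) (b - t)) in Hy.
      apply Rabs_def2 in Hy. destruct Hy as [Hy1 Hy2].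
      pose proof (Rmin_l (t - a) (b - t)). pose proof (Rmin_r (t - a) (b - t)). lra.
    + apply Hc; auto.
Qed.

Lemma int_lip (f : R -> R) s a b M : (forall z, a < z < b -> continuous f z) ->
  (forall z, a < z < b -> Rabs (f z) <= M) -> a < s < b ->
  forall t t', a < t < b -> a < t' < b -> Rabs (RInt f s t - RInt f s t') <= M * Rabs (t - t').
Proof.
  intros Hc Hb Hs t t' Ht Ht'.
  destruct (int_facts f s a b M Hc Hb Hs t Ht) as [H1 _].
  destruct (int_facts f s a b M Hc Hb Hs t' Ht') as [H2 _].
  rewrite RInt_diff by auto.
  apply RInt_abs_bound. apply ex_RInt_cont. intros z Hz. apply Hc. eapply in_between. exact Ht'. exact Ht. exact Hz.
  intros z Hz. apply Hb. eapply in_between. exact Ht'. exact Ht. exact Hz.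
Qed.

Lemma abs3 x y z : Rabs (x + y - z) <= Rabs x + Rabs y + Rabs z.
Proof. unfold Rminus. eapply Rle_trans. apply Rabs_triang. rewrite Rabs_Ropp. pose proof (Rabs_triang x y). lra. Qed.

Fixpoint pic (F : (nat -> R) -> nat -> R) (l : nat -> R) (s : R) (m : nat) : R -> nat -> R :=
  match m with
  | O => fun _ => l
  | S m' => fun t i => l i + RInt (fun z => F (pic F l s m' z) i) s t
  end.

Definition boxed d (l v : nat -> R) := forall i, (i <= d)%nat -> Rabs (v i - l i) <= 1.

Lemma picard d F l s M L :
  0 < M -> 0 < L ->
  (forall v, boxed d l v -> forall i, (i <= d)%nat -> Rabs (F v i) <= M) ->
  (forall v w, boxed d l v -> boxed d l w -> forall i, (i <= d)%nat ->
       Rabs (F v i - F w i) <= L * nrm d (vsub v w)) ->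
  (forall (H : R -> nat -> R) t, (forall i, (i <= d)%nat -> continuous (fun z => H z i) t) ->
       forall i, (i <= d)%nat -> continuous (fun z => F (H z) i) t) ->
  exists del, 0 < del /\ exists phi : R -> nat -> R,
    (forall i, (i <= d)%nat -> phi s i = l i) /\
    forall t, s - del < t < s + del -> forall i, (i <= d)%nat ->
      Rabs (phi t i - l i) <= 1 /\ continuous (fun z => phi z i) t /\
      phi t i = l i + RInt (fun z => F (phi z) i) s t.
Proof.
  intros HM HL Hbox Hlip Hcont.
  set (D := INR (S d)).
  assert (HD : 1 <= D) by (unfold D; rewrite S_INR; pose proof (pos_INR d); lra).
  set (del := 1 / (4 * D * (M + L))).
  assert (Hdel : 0 < del) by (unfold del; apply Rdiv_lt_0_compat; [lra|]; apply Rmult_lt_0_compat; lra).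
  assert (HDMd : D * M * del <= 1/4).
  { unfold del. apply (Rmult_le_reg_r (4 * D * (M + L))). apply Rmult_lt_0_compat; lra.
    field_simplify; try lra. assert (0 <= D * L) by nra. nra. }
  assert (HDLd : D * L * del <= 1/4).
  { unfold del. apply (Rmult_le_reg_r (4 * D * (M + L))). apply Rmult_lt_0_compat; lra.
    field_simplify; try lra. assert (0 <= D * M) by nra. nra. }
  assert (HMd : M * del <= 1/4) by nra.
  set (a := s - del). set (b := s + del).
  assert (Hs : a < s < b) by (unfold a, b; lra).
  assert (Hts : forall t, a < t < b -> Rabs (t - s) <= del).
  { intros t Ht. unfold a, b in Ht. apply Rabs_le. lra. }
  assert (Inv : forall m t, a < t < b -> forall i, (i <= d)%nat ->
            Rabs (pic F l s m t i - l i) <= M * Rabs (t - s) /\ continuous (fun z => pic F l s m z i) t).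
  { induction m; intros t Ht i Hi.
    - simpl. rewrite Rminus_diag, Rabs_R0. split. apply Rmult_le_pos; [lra|apply Rabs_pos].
      apply continuous_const.
    - assert (Hbx : forall z, a < z < b -> boxed d l (pic F l s m z)).
      { intros z Hz j Hj. destruct (IHm z Hz j Hj) as [H1 _]. pose proof (Hts z Hz).
        assert (M * Rabs (z - s) <= M * del) by (apply Rmult_le_compat_l; lra). lra. }
      assert (Hc : forall z, a < z < b -> continuous (fun z => F (pic F l s m z) i) z).
      { intros z Hz. apply Hcont; auto. intros j Hj. apply (IHm z Hz j Hj). }
      assert (Hb : forall z, a < z < b -> Rabs (F (pic F l s m z) i) <= M).
      { intros z Hz. apply Hbox; auto. }
      destruct (int_facts _ s a b M Hc Hb Hs t Ht) as [_ [H2 H3]].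
      simpl. split.
      + rewrite add_sub_l. exact H2.
      + apply (is_derive_cont _ t (0 + F (pic F l s m t) i)).
        apply dplus. apply dconst. exact H3. }
  assert (Hbx : forall m z, a < z < b -> boxed d l (pic F l s m z)).
  { intros m z Hz j Hj. destruct (Inv m z Hz j Hj) as [H1 _]. pose proof (Hts z Hz).
    assert (M * Rabs (z - s) <= M * del) by (apply Rmult_le_compat_l; lra). lra. }
  assert (Hcm : forall m i, (i <= d)%nat -> forall z, a < z < b -> continuous (fun z => F (pic F l s m z) i) z).
  { intros m i Hi z Hz. apply Hcont; auto. intros j Hj. apply (Inv m z Hz j Hj). }
  assert (Hbm : forall m i, (i <= d)%nat -> forall z, a < z < b -> Rabs (F (pic F l s m z) i) <= M).
  { intros m i Hi z Hz. apply Hbox; auto. }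
  set (C := D * M * del). set (q := D * L * del).
  assert (Hq : 0 <= q <= 1/2). { unfold q. split; [|lra]. apply Rmult_le_pos; [nra|lra]. }
  assert (HC : 0 <= C) by (unfold C; apply Rmult_le_pos; [nra|lra]).
  assert (HC4 : C <= 1/4) by (unfold C; lra).
  assert (Diff : forall m t, a < t < b -> nrm d (vsub (pic F l s (S m) t) (pic F l s m t)) <= C * q ^ m).
  { induction m; intros t Ht.
    - simpl pow. rewrite Rmult_1_r. unfold C. replace (D * M * del) with (D * (M * del)) by ring.
      apply nrm_le_const. intros i Hi. unfold vsub. destruct (Inv 1%nat t Ht i Hi) as [H1 _].
      simpl pic in H1 |- *. pose proof (Hts t Ht).
      assert (M * Rabs (t - s) <= M * del) by (apply Rmult_le_compat_l; lra). lra.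
    - replace (C * q ^ S m) with (D * (L * (C * q ^ m) * del)) by (unfold q; simpl; ring).
      apply nrm_le_const. intros i Hi. unfold vsub.
      change (pic F l s (S (S m)) t i) with (l i + RInt (fun z => F (pic F l s (S m) z) i) s t).
      change (pic F l s (S m) t i) with (l i + RInt (fun z => F (pic F l s m z) i) s t).
      destruct (int_facts _ s a b M (Hcm (S m) i Hi) (Hbm (S m) i Hi) Hs t Ht) as [E1 _].
      destruct (int_facts _ s a b M (Hcm m i Hi) (Hbm m i Hi) Hs t Ht) as [E2 _].
      rewrite add_sub_add.
      rewrite <- RInt_minus' by auto.
      eapply Rle_trans. apply RInt_abs_bound.
      + apply ex_RInt_cont. intros z Hz.
        apply (continuous_minus (fun z => F (pic F l s (S m) z) i) (fun z => F (pic F l s m z) i)); apply Hcm; auto; ib.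
      + intros z Hz. assert (Hz' : a < z < b) by (ib).
        eapply Rle_trans. apply Hlip; auto. apply Rmult_le_compat_l. lra. apply IHm; auto.
      + assert (0 <= L * (C * q ^ m)) by (apply Rmult_le_pos; [lra|apply Rmult_le_pos; [lra|apply pow_le; lra]]).
        apply Rmult_le_compat_l; auto. }
  set (phi := fun t i => real (Lim_seq (fun m => pic F l s m t i))).
  assert (Hphi : forall t, a < t < b -> forall i, (i <= d)%nat -> forall m,
             Rabs (phi t i - pic F l s m t i) <= 2 * C * q ^ m).
  { intros t Ht i Hi. apply lim_bound. exact Hq. intros m.
    eapply Rle_trans. 2: apply (Diff m t Ht). apply (comp_le_nrm d (vsub _ _) i Hi). }
  assert (Hlip_m : forall m i, (i <= d)%nat -> forall t t', a < t < b -> a < t' < b ->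
             Rabs (pic F l s m t i - pic F l s m t' i) <= M * Rabs (t - t')).
  { intros m i Hi t t' Ht Ht'. destruct m.
    - simpl. rewrite Rminus_diag, Rabs_R0. apply Rmult_le_pos; [lra|apply Rabs_pos].
    - cbn [pic]. replace (l i + RInt (fun z : R => F (pic F l s m z) i) s t -
        (l i + RInt (fun z : R => F (pic F l s m z) i) s t'))
        with (RInt (fun z : R => F (pic F l s m z) i) s t - RInt (fun z : R => F (pic F l s m z) i) s t') by ring.
      apply (int_lip _ s a b M (Hcm m i Hi) (Hbm m i Hi) Hs t t' Ht Ht'). }
  assert (Hlipphi : forall i, (i <= d)%nat -> forall t t', a < t < b -> a < t' < b ->
             Rabs (phi t i - phi t' i) <= M * Rabs (t - t')).
  { intros i Hi t t' Ht Ht'. apply (le_of_geom _ _ (4 * C) q). lra. intros m.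
    pose proof (Hphi t Ht i Hi m). pose proof (Hphi t' Ht' i Hi m). pose proof (Hlip_m m i Hi t t' Ht Ht').
    replace (phi t i - phi t' i) with ((phi t i - pic F l s m t i) + (pic F l s m t i - pic F l s m t' i)
       - (phi t' i - pic F l s m t' i)) by ring.
    eapply Rle_trans. apply abs3. lra. }
  assert (Hcphi : forall i, (i <= d)%nat -> forall t, a < t < b -> continuous (fun z => phi z i) t).
  { intros i Hi t Ht. apply eps_cont. intros eps He.
    assert (Hp : 0 < Rmin (eps / (2*M)) (Rmin (t - a) (b - t))).
    { apply Rmin_pos. apply Rdiv_lt_0_compat; lra. apply Rmin_pos; lra. }
    exists (Rmin (eps / (2*M)) (Rmin (t - a) (b - t))). split; auto.
    intros y Hy. pose proof (Rmin_l (eps / (2*M)) (Rmin (t - a) (b - t))).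
    pose proof (Rmin_r (eps / (2*M)) (Rmin (t - a) (b - t))).
    pose proof (Rmin_l (t - a) (b - t)). pose proof (Rmin_r (t - a) (b - t)).
    assert (Hy' : a < y < b) by (apply Rabs_def2 in Hy; lra).
    eapply Rle_lt_trans. apply (Hlipphi i Hi y t Hy' Ht).
    apply (Rmult_lt_compat_l M) in Hy; auto.
    assert (M * (eps / (2 * M)) = eps / 2) by (field; lra).
    assert (M * Rmin (eps / (2 * M)) (Rmin (t - a) (b - t)) <= M * (eps / (2*M))) by (apply Rmult_le_compat_l; lra).
    lra. }
  assert (Hbphi : forall z, a < z < b -> boxed d l (phi z)).
  { intros z Hz j Hj. pose proof (Hphi z Hz j Hj 0%nat) as Hq0. simpl pic in Hq0. rewrite pow_O in Hq0. lra. }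
  exists del. split; auto. exists phi. split.
  - intros i Hi. unfold phi. rewrite (Lim_seq_ext _ (fun _ => l i)). rewrite Lim_seq_const. reflexivity.
    intros m; destruct m; simpl; [reflexivity|]. rewrite RInt_point. unfold zero; simpl; ring.
  - intros t Ht0 i Hi. assert (Ht : a < t < b) by (unfold a, b; lra).
    split; [apply Hbphi; auto|]. split; [apply Hcphi; auto|].
    assert (Hcf : forall z, a < z < b -> continuous (fun z => F (phi z) i) z).
    { intros z Hz. apply Hcont; auto. }
    assert (Hbf : forall z, a < z < b -> Rabs (F (phi z) i) <= M).
    { intros z Hz. apply Hbox; auto. }
    destruct (int_facts _ s a b M Hcf Hbf Hs t Ht) as [Ef _].
    apply Rminus_diag_uniq.
    apply (zero_of_geom _ (2 * C * q + L * (D * (2 * C)) * del) q). lra.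
    intros m.
    destruct (int_facts _ s a b M (Hcm m i Hi) (Hbm m i Hi) Hs t Ht) as [Em _].
    pose proof (Hphi t Ht i Hi (S m)) as H1. cbn [pic] in H1.
    assert (H2 : Rabs (RInt (fun z => F (pic F l s m z) i) s t - RInt (fun z => F (phi z) i) s t)
                 <= L * (D * (2 * C * q ^ m)) * Rabs (t - s)).
    { rewrite <- RInt_minus' by auto. apply RInt_abs_bound.
      - apply ex_RInt_cont. intros z Hz.
        apply (continuous_minus (fun z => F (pic F l s m z) i) (fun z => F (phi z) i)).
        apply Hcm; auto; ib. apply Hcf; ib.
      - intros z Hz. assert (Hz' : a < z < b) by (ib).
        eapply Rle_trans. apply Hlip; auto. apply Rmult_le_compat_l. lra.
        apply nrm_le_const. intros j Hj. unfold vsub. rewrite Rabs_minus_sym. apply Hphi; auto. }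
    pose proof (Hts t Ht).
    assert (0 <= L * (D * (2 * C * q ^ m))) by (apply Rmult_le_pos; [lra|apply Rmult_le_pos; [lra|apply Rmult_le_pos;[lra|apply pow_le; lra]]]).
    assert (L * (D * (2 * C * q ^ m)) * Rabs (t - s) <= L * (D * (2 * C * q ^ m)) * del) by (apply Rmult_le_compat_l; auto).
    replace (phi t i - (l i + RInt (fun z : R => F (phi z) i) s t)) with
      ((phi t i - (l i + RInt (fun z : R => F (pic F l s m z) i) s t)) +
       (RInt (fun z => F (pic F l s m z) i) s t - RInt (fun z => F (phi z) i) s t)) by ring.
    eapply Rle_trans. apply Rabs_triang. simpl pow in H1. 
    replace ((2 * C * q + L * (D * (2 * C)) * del) * q ^ m) with (2 * C * (q * q ^ m) + L * (D * (2 * C * q ^ m)) * del) by ring.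
    lra.
Qed.

Lemma int_deriv (f : R -> R) s a b : (forall z, a < z < b -> continuous f z) -> a < s < b ->
  forall t, a < t < b -> ex_RInt f s t /\ is_derive (fun t => RInt f s t) t (f t).
Proof.
  intros Hc Hs.
  assert (Hex : forall t, a < t < b -> ex_RInt f s t).
  { intros t Ht. apply ex_RInt_cont. intros z Hz. apply Hc. ib. }
  intros t Ht. split; [auto|].
  apply (is_derive_RInt f (fun t => RInt f s t) s t).
  + assert (Hd : 0 < Rmin (t - a) (b - t)) by (apply Rmin_pos; lra).
    exists (mkposreal _ Hd). intros y Hy. apply RInt_correct'. apply Hex.
    change (Rabs (y - t) < Rmin (t - a) (b - t)) in Hy.
    apply Rabs_def2 in Hy. destruct Hy as [Hy1 Hy2].
    pose proof (Rmin_l (t - a) (b - t)). pose proof (Rmin_r (t - a) (b - t)). lra.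
  + apply Hc; auto.
Qed.

Lemma exp_le' x y : x <= y -> exp x <= exp y.
Proof. intros H. destruct (Rle_lt_or_eq_dec x y H) as [H1|H1]. left; apply exp_increasing; auto. subst; lra. Qed.

Lemma const_on' (f df : R -> R) a b : a <= b ->
  (forall x, a < x < b -> is_derive f x (df x)) ->
  (forall x, a <= x <= b -> continuous f x) ->
  (forall x, a < x < b -> df x = 0) -> f a = f b.
Proof.
  intros Hab Hd Hc Hz. destruct (Req_dec a b) as [->|Hne]; [reflexivity|].
  assert (Hin : forall y y', a < y -> y <= y' -> y' < b -> f y = f y').
  { intros y y' H1 H2 H3. apply (const_on f df y y'); auto. intros x Hx; apply Hd; lra.
    intros x Hx; apply Hz; lra. }
  set (m := (a + b) / 2).
  assert (Ha : f a - f m = 0).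
  { apply zero_of_eps. intros eps He. destruct (cont_eps f a (Hc a ltac:(lra)) eps He) as [d [Hd0 Hd1]].
    assert (0 < Rmin d (b - a)) by (apply Rmin_pos; lra).
    pose proof (Rmin_l d (b - a)). pose proof (Rmin_r d (b - a)).
    rewrite <- (Hin (a + Rmin d (b - a) / 2) m) by (unfold m; lra).
    rewrite Rabs_minus_sym. left. apply Hd1. rewrite Rabs_right; lra. }
  assert (Hb : f b - f m = 0).
  { apply zero_of_eps. intros eps He. destruct (cont_eps f b (Hc b ltac:(lra)) eps He) as [d [Hd0 Hd1]].
    assert (0 < Rmin d (b - a)) by (apply Rmin_pos; lra).
    pose proof (Rmin_l d (b - a)). pose proof (Rmin_r d (b - a)).
    rewrite (Hin m (b - Rmin d (b - a) / 2)) by (unfold m; lra).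
    rewrite Rabs_minus_sym. left. apply Hd1. rewrite Rabs_left; lra. }
  lra.
Qed.

Lemma cmult (f g : R -> R) x : continuous f x -> continuous g x -> continuous (fun y => f y * g y) x.
Proof. intros H1 H2. exact (@continuous_mult R_UniformSpace R_AbsRing f g x H1 H2). Qed.
Lemma cplus (f g : R -> R) x : continuous f x -> continuous g x -> continuous (fun y => f y + g y) x.
Proof. intros H1 H2. exact (@continuous_plus R_UniformSpace R_AbsRing R_NormedModule f g x H1 H2). Qed.
Lemma copp (f : R -> R) x : continuous f x -> continuous (fun y => - f y) x.
Proof. intros H1. exact (@continuous_opp R_UniformSpace R_AbsRing R_NormedModule f x H1). Qed.
Lemma cconst (c x : R) : continuous (fun _ => c) x.
Proof. exact (@continuous_const R_UniformSpace R_UniformSpace c x). Qed.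
Lemma cminus (f g : R -> R) x : continuous f x -> continuous g x -> continuous (fun y => f y - g y) x.
Proof. intros H1 H2. apply cplus; auto. apply copp; auto. Qed.
Lemma cext (f g : R -> R) x : (forall y, f y = g y) -> continuous f x -> continuous g x.
Proof. intros H1 H2. exact (@continuous_ext R_UniformSpace R_UniformSpace f g x H1 H2). Qed.
Lemma cext_loc (f g : R -> R) x : (exists e, 0 < e /\ forall y, Rabs (y - x) < e -> f y = g y) ->
  continuous f x -> continuous g x.
Proof.
  intros [e [He Hfg]] Hf. apply eps_cont. intros eps Heps.
  destruct (cont_eps f x Hf eps Heps) as [d [Hd Hd2]].
  exists (Rmin d e). split. apply Rmin_pos; auto. intros y Hy.
  pose proof (Rmin_l d e). pose proof (Rmin_r d e).
  rewrite <- (Hfg y) by lra. rewrite <- (Hfg x) by (rewrite Rminus_diag, Rabs_R0; lra). apply Hd2. lra.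
Qed.

Definition Fs (n : nat) (k cb : R) (v : nat -> R) (i : nat) : R :=
  match i with
  | O => - v O * sum_f_R0 (fun m => v (S m)) (pred n)
  | S _ => - (v i) ^ 2 + k / INR n * (v O - cb)
  end.

Lemma sum_abs_bound (f : nat -> R) N K : (forall m, (m <= N)%nat -> Rabs (f m) <= K) ->
  Rabs (sum_f_R0 f N) <= INR (S N) * K.
Proof.
  intros H. eapply Rle_trans. apply sum_f_R0_triangle.
  apply (nrm_le_const N f K). intros i Hi. auto.
Qed.

Lemma nrm_split n x : (1 <= n)%nat -> nrm n x = Rabs (x O) + sum_f_R0 (fun m => Rabs (x (S m))) (pred n).
Proof. intros H. unfold nrm. rewrite decomp_sum by lia. reflexivity. Qed.

Lemma sum_nonneg (f : nat -> R) N : (forall m, 0 <= f m) -> 0 <= sum_f_R0 f N.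
Proof. intros H. induction N; simpl; [apply H|]. pose proof (H (S N)). lra. Qed.

Definition Mf (n : nat) (k cb K : R) := K * (INR n * K) + K * K + Rabs (k / INR n) * (K + Rabs cb) + 1.
Definition Lf (n : nat) (k K : R) := INR n * K + K + 2 * K + Rabs (k / INR n) + 1.

Lemma Fs_bound n k cb K v : (1 <= n)%nat -> 0 <= K -> (forall i, (i <= n)%nat -> Rabs (v i) <= K) ->
  forall i, (i <= n)%nat -> Rabs (Fs n k cb v i) <= Mf n k cb K.
Proof.
  intros Hn HK Hv i Hi. unfold Mf.
  assert (HnK : 0 <= INR n * K) by (apply Rmult_le_pos; [apply pos_INR|auto]).
  assert (0 <= Rabs (k / INR n) * (K + Rabs cb)) by (apply Rmult_le_pos; [apply Rabs_pos|pose proof (Rabs_pos cb); lra]).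
  destruct i as [|i'].
  - simpl Fs. rewrite Rabs_mult, Rabs_Ropp.
    assert (Hs : Rabs (sum_f_R0 (fun m => v (S m)) (pred n)) <= INR n * K).
    { replace n with (S (pred n)) at 2 by lia. apply sum_abs_bound. intros m Hm. apply Hv. lia. }
    pose proof (Hv O ltac:(lia)). pose proof (Rabs_pos (v O)). pose proof (Rabs_pos (sum_f_R0 (fun m => v (S m)) (pred n))).
    assert (Rabs (v O) * Rabs (sum_f_R0 (fun m => v (S m)) (pred n)) <= K * (INR n * K)) by (apply Rmult_le_compat; auto).
    nra.
  - cbv beta iota delta [Fs]. eapply Rle_trans. apply Rabs_triang. rewrite Rabs_Ropp.
    rewrite Rabs_mult. simpl pow. rewrite Rmult_1_r, Rabs_mult.
    pose proof (Hv (S i') Hi). pose proof (Hv O ltac:(lia)). pose proof (Rabs_pos (v (S i'))).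
    assert (Rabs (v (S i')) * Rabs (v (S i')) <= K * K) by (apply Rmult_le_compat; auto).
    assert (Rabs (v O - cb) <= K + Rabs cb) by (unfold Rminus; eapply Rle_trans; [apply Rabs_triang|rewrite Rabs_Ropp; lra]).
    assert (Rabs (k / INR n) * Rabs (v O - cb) <= Rabs (k / INR n) * (K + Rabs cb)) by (apply Rmult_le_compat_l; [apply Rabs_pos|auto]).
    nra.
Qed.

Lemma Fs_lip n k cb K v w : (1 <= n)%nat -> 0 <= K -> (forall i, (i <= n)%nat -> Rabs (v i) <= K) ->
  (forall i, (i <= n)%nat -> Rabs (w i) <= K) ->
  forall i, (i <= n)%nat -> Rabs (Fs n k cb v i - Fs n k cb w i) <= Lf n k K * nrm n (vsub v w).
Proof.
  intros Hn HK Hv Hw i Hi. unfold Lf.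
  assert (HnK : 0 <= INR n * K) by (apply Rmult_le_pos; [apply pos_INR|auto]).
  pose proof (nrm_nonneg n (vsub v w)) as Hnn.
  assert (H0 : Rabs (v O - w O) <= nrm n (vsub v w)) by (apply (comp_le_nrm n (vsub v w) O); lia).
  destruct i as [|i'].
  - simpl Fs.
    set (Sv := sum_f_R0 (fun m => v (S m)) (pred n)). set (Sw := sum_f_R0 (fun m => w (S m)) (pred n)).
    assert (HSw : Rabs Sw <= INR n * K).
    { unfold Sw. replace n with (S (pred n)) at 2 by lia. apply sum_abs_bound. intros m Hm. apply Hw. lia. }
    assert (HSd : Rabs (Sv - Sw) <= nrm n (vsub v w)).
    { unfold Sv, Sw. rewrite <- minus_sum. eapply Rle_trans. apply sum_f_R0_triangle.
      rewrite (nrm_split n _ Hn). unfold vsub. pose proof (Rabs_pos (v O - w O)). lra. }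
    replace (- v O * Sv - - w O * Sw) with (- ((v O - w O) * Sw + v O * (Sv - Sw))) by ring.
    rewrite Rabs_Ropp. eapply Rle_trans. apply Rabs_triang. rewrite !Rabs_mult.
    pose proof (Hv O ltac:(lia)).
    assert (Rabs (v O - w O) * Rabs Sw <= nrm n (vsub v w) * (INR n * K)) by (apply Rmult_le_compat; auto using Rabs_pos).
    assert (Rabs (v O) * Rabs (Sv - Sw) <= K * nrm n (vsub v w)) by (apply Rmult_le_compat; auto using Rabs_pos).
    assert (0 <= Rabs (k / INR n) * nrm n (vsub v w)) by (apply Rmult_le_pos; auto using Rabs_pos).
    nra.
  - cbv beta iota delta [Fs].
    replace (- v (S i') ^ 2 + k / INR n * (v O - cb) - (- w (S i') ^ 2 + k / INR n * (w O - cb)))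
      with (- ((v (S i') - w (S i')) * (v (S i') + w (S i'))) + k / INR n * (v O - w O)) by ring.
    eapply Rle_trans. apply Rabs_triang. rewrite Rabs_Ropp, !Rabs_mult.
    assert (Hi1 : Rabs (v (S i') - w (S i')) <= nrm n (vsub v w)) by (apply (comp_le_nrm n (vsub v w) (S i')); lia).
    assert (Rabs (v (S i') + w (S i')) <= 2 * K) by (eapply Rle_trans; [apply Rabs_triang|pose proof (Hv _ Hi); pose proof (Hw _ Hi); lra]).
    assert (Rabs (v (S i') - w (S i')) * Rabs (v (S i') + w (S i')) <= nrm n (vsub v w) * (2 * K)) by (apply Rmult_le_compat; auto using Rabs_pos).
    assert (Rabs (k / INR n) * Rabs (v O - w O) <= Rabs (k / INR n) * nrm n (vsub v w)) by (apply Rmult_le_compat_l; auto using Rabs_pos).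
    nra.
Qed.

Lemma Fs_cont n k cb (H : R -> nat -> R) t : (1 <= n)%nat -> (forall i, (i <= n)%nat -> continuous (fun z => H z i) t) ->
  forall i, (i <= n)%nat -> continuous (fun z => Fs n k cb (H z) i) t.
Proof.
  intros Hn Hc i Hi. destruct i as [|i'].
  - simpl Fs. apply cmult. apply copp. apply Hc; lia.
    assert (forall N, (N < n)%nat -> continuous (fun z => sum_f_R0 (fun m => H z (S m)) N) t).
    { induction N; intros HN; simpl. apply Hc; lia. apply cplus. apply IHN; lia. apply Hc; lia. }
    destruct n; [lia|]. apply H0. simpl; lia.
  - cbv beta iota delta [Fs]. apply cplus.
    + apply copp. apply (cext (fun z => H z (S i') * (H z (S i') * 1))). intros; simpl; ring.
      apply cmult. apply Hc; auto. apply cmult. apply Hc; auto. apply cconst.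
    + apply cmult. apply cconst. apply cminus. apply Hc; lia. apply cconst.
Qed.

Lemma lip_of_deriv (f df : R -> R) a b B : a <= b ->
  (forall x, a <= x <= b -> is_derive f x (df x)) -> (forall x, a <= x <= b -> Rabs (df x) <= B) ->
  Rabs (f b - f a) <= B * (b - a).
Proof.
  intros Hab Hd Hb.
  assert (H1 := mono_le (fun x => B * x - f x) (fun x => B - df x) a b Hab).
  assert (H2 := mono_le (fun x => B * x + f x) (fun x => B + df x) a b Hab).
  cbv beta in H1, H2.
  assert (B * a - f a <= B * b - f b).
  { apply H1. intros x Hx. apply (dext _ _ (B * 1 - df x)). apply dminus. apply is_derive_scal. apply did. apply Hd; lra. ring.
    intros x Hx. pose proof (Hb x ltac:(lra)). apply abs_le_inv in H. lra. }
  assert (B * a + f a <= B * b + f b).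
  { apply H2. intros x Hx. apply (dext _ _ (B * 1 + df x)). apply dplus. apply is_derive_scal. apply did. apply Hd; auto. ring.
    intros x Hx. pose proof (Hb x ltac:(lra)). apply abs_le_inv in H0. lra. }
  apply Rabs_le. lra.
Qed.


Lemma left_limit (f : R -> R) t1 s B : t1 < s -> 0 <= B ->
  (forall x y, t1 < x < s -> t1 < y < s -> Rabs (f x - f y) <= B * Rabs (x - y)) ->
  forall eps, 0 < eps -> exists eta, 0 < eta /\ forall y, s - eta < y < s ->
     t1 < y /\ Rabs (f y - real (Lim_seq (fun k => f (s - (s - t1) * (1/2) ^ (S k))))) <= eps.
Proof.
  intros Hs HB Hl eps He.
  set (tk := fun k : nat => s - (s - t1) * (1/2) ^ (S k)).
  assert (Htk : forall k, t1 < tk k < s).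
  { intros k. unfold tk. assert (0 < (1/2) ^ (S k)) by (apply pow_lt; lra).
    assert ((1/2) ^ (S k) <= 1/2) by (simpl; assert ((1/2)^k <= 1) by (apply pow_le1'; lra); assert (0 < (1/2)^k) by (apply pow_lt; lra); nra).
    split; nra. }
  set (C := B * (s - t1) / 4).
  assert (HC : forall k, Rabs (f (tk (S k)) - f (tk k)) <= C * (1/2) ^ k).
  { intros k. eapply Rle_trans. apply Hl; apply Htk. unfold tk, C.
    replace (s - (s - t1) * (1 / 2) ^ S (S k) - (s - (s - t1) * (1 / 2) ^ S k)) with ((s - t1) * (1/2)^k * (1/4)) by (simpl; field).
    rewrite Rabs_right. right; field. assert (0 < (1/2)^k) by (apply pow_lt; lra). apply Rle_ge. apply Rmult_le_pos; [|lra]. apply Rmult_le_pos; lra. }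
  pose proof (lim_bound (fun k => f (tk k)) C (1/2) ltac:(lra) HC) as Hlb.
  destruct (geom_small (1/2) (2 * C + B * (s - t1)) eps ltac:(lra) He) as [k Hk].
  exists ((s - t1) * (1/2) ^ (S k)). split. apply Rmult_lt_0_compat. lra. apply pow_lt; lra.
  intros y Hy. assert (Hy1 : tk k < y) by (unfold tk; lra). pose proof (Htk k). split. lra.
  specialize (Hlb k). fold tk.
  assert (Rabs (f y - f (tk k)) <= B * ((s - t1) * (1/2) ^ k)).
  { eapply Rle_trans. apply Hl. lra. apply Htk. rewrite Rabs_right by lra. apply Rmult_le_compat_l. auto.
    unfold tk. simpl. assert (0 < (1/2)^k) by (apply pow_lt; lra). nra. }
  change (Lim_seq (fun k0 => f (s - (s - t1) * (1/2) ^ (S k0)))) with (Lim_seq (fun k0 => f (tk k0))).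
  cbv beta in Hlb. set (Lm := real (Lim_seq (fun k0 : nat => f (tk k0)))) in *.
  replace (f y - Lm) with ((f y - f (tk k)) - (Lm - f (tk k))) by ring.
  eapply Rle_trans. apply Rabs_triang. rewrite Rabs_Ropp.
  assert (B * ((s - t1) * (1/2)^k) + 2 * C * (1/2)^k = (2 * C + B * (s - t1)) * (1/2)^k) by ring. lra.
Qed.

Lemma Mf_pos n k cb K : 0 <= K -> 0 < Mf n k cb K.
Proof.
  intros HK. unfold Mf. assert (0 <= INR n * K) by (apply Rmult_le_pos; [apply pos_INR|auto]).
  assert (0 <= Rabs (k / INR n) * (K + Rabs cb)) by (apply Rmult_le_pos; [apply Rabs_pos|pose proof (Rabs_pos cb); lra]).
  nra.
Qed.

Lemma Lf_pos n k K : 0 <= K -> 0 < Lf n k K.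
Proof.
  intros HK. unfold Lf. assert (0 <= INR n * K) by (apply Rmult_le_pos; [apply pos_INR|auto]).
  pose proof (Rabs_pos (k / INR n)). lra.
Qed.

Lemma extend (n : nat) (k cb rho0 : R) (lam0 : nat -> R) (s : R) (lam : nat -> R -> R) (rho : R -> R) (t1 K0 : R) :
  (1 <= n)%nat -> 0 < t1 < s -> 0 <= K0 ->
  is_sol n k cb rho0 lam0 s lam rho ->
  (forall t, t1 < t < s -> Rabs (rho t) <= K0 /\ forall i, (1 <= i <= n)%nat -> Rabs (lam i t) <= K0) ->
  exists T, s < T /\ exists lam' rho', is_sol n k cb rho0 lam0 T lam' rho' /\
     (forall t, 0 <= t < s -> rho' t = rho t /\ forall i, (1 <= i <= n)%nat -> lam' i t = lam i t).
Proof.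
  intros Hn Ht1 HK0 Hsol Hbd0.
  destruct Hsol as [Hr0 [Hl0 [Hrl [Hll Hder]]]].
  set (old := fun t i => match i with O => rho t | S _ => lam i t end).
  assert (Hold : forall t, 0 < t < s -> forall i, (i <= n)%nat -> is_derive (fun z => old z i) t (Fs n k cb (old t) i)).
  { intros t Ht i Hi. destruct (Hder t Ht) as [Hl Hr]. destruct i as [|i'].
    - exact Hr.
    - exact (Hl (S i') ltac:(lia)). }
  assert (Hbd : forall t, t1 < t < s -> forall i, (i <= n)%nat -> Rabs (old t i) <= K0).
  { intros t Ht i Hi. destruct (Hbd0 t Ht) as [H1 H2]. destruct i as [|i']. exact H1. apply H2. lia. }
  set (K := K0 + 1). assert (HK : 0 <= K) by (unfold K; lra).
  set (M := Mf n k cb K). set (L := Lf n k K).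
  assert (HM : 0 < M) by (apply Mf_pos; auto). assert (HL : 0 < L) by (apply Lf_pos; auto).
  assert (HFold : forall t, t1 < t < s -> forall i, (i <= n)%nat -> Rabs (Fs n k cb (old t) i) <= M).
  { intros t Ht i Hi. apply Fs_bound; auto. intros j Hj. pose proof (Hbd t Ht j Hj). unfold K; lra. }
  assert (Hlipo : forall i, (i <= n)%nat -> forall x y, t1 < x < s -> t1 < y < s ->
            Rabs (old x i - old y i) <= M * Rabs (x - y)).
  { intros i Hi x y Hx Hy. destruct (Rle_or_lt y x) as [Hxy|Hxy].
    - rewrite (Rabs_right (x - y)) by lra. apply (lip_of_deriv (fun z => old z i) (fun z => Fs n k cb (old z) i)); auto.
      intros z Hz. apply Hold; auto; lra. intros z Hz. apply HFold; auto; lra.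
    - rewrite Rabs_minus_sym, (Rabs_left (x - y)) by lra. replace (- (x - y)) with (y - x) by ring.
      apply (lip_of_deriv (fun z => old z i) (fun z => Fs n k cb (old z) i)); auto. lra.
      intros z Hz. apply Hold; auto; lra. intros z Hz. apply HFold; auto; lra. }
  set (ell := fun i => real (Lim_seq (fun kk => old (s - (s - t1) * (1/2) ^ (S kk)) i))).
  assert (Hell : forall i, (i <= n)%nat -> forall eps, 0 < eps -> exists eta, 0 < eta /\
            forall y, s - eta < y < s -> t1 < y /\ Rabs (old y i - ell i) <= eps).
  { intros i Hi. apply (left_limit (fun z => old z i) t1 s M). lra. lra. apply Hlipo; auto. }
  assert (Hellb : forall i, (i <= n)%nat -> Rabs (ell i) <= K0).
  { intros i Hi. apply Rle_plus_epsilon. intros eps He. destruct (Hell i Hi eps He) as [eta [Heta H]].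
    destruct (H (s - Rmin eta (s - t1) / 2)) as [H1 H2].
    { pose proof (Rmin_l eta (s - t1)). pose proof (Rmin_r eta (s - t1)). assert (0 < Rmin eta (s - t1)) by (apply Rmin_pos; lra). lra. }
    pose proof (Hbd (s - Rmin eta (s - t1) / 2) ltac:(split; [lra|]; assert (0 < Rmin eta (s - t1)) by (apply Rmin_pos; lra); lra) i Hi).
    replace (ell i) with (old (s - Rmin eta (s - t1) / 2) i - (old (s - Rmin eta (s - t1) / 2) i - ell i)) by ring.
    eapply Rle_trans. apply Rabs_triang. rewrite Rabs_Ropp. lra. }
  assert (Hboxv : forall v, boxed n ell v -> forall i, (i <= n)%nat -> Rabs (v i) <= K).
  { intros v Hv i Hi. pose proof (Hv i Hi). pose proof (Hellb i Hi).
    replace (v i) with ((v i - ell i) + ell i) by ring. eapply Rle_trans. apply Rabs_triang. unfold K; lra. }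
  destruct (picard n (Fs n k cb) ell s M L HM HL) as [del [Hdel [phi [Hphis Hphi]]]].
  { intros v Hv i Hi. apply Fs_bound; auto. }
  { intros v w Hv Hw i Hi. apply Fs_lip; auto. }
  { intros H t Hc i Hi. apply Fs_cont; auto. }
  set (a0 := Rmax t1 (s - del)).
  assert (Ha0 : t1 <= a0 /\ s - del <= a0 /\ a0 < s) by (unfold a0; split; [apply Rmax_l|split; [apply Rmax_r|apply Rmax_lub_lt; lra]]).
  set (G := fun t i => if Rlt_dec t s then old t i else phi t i).
  set (lam' := fun i t => if Rlt_dec t s then lam i t else phi t i).
  set (rho' := fun t => if Rlt_dec t s then rho t else phi t O).
  assert (HGbox : forall z, a0 < z < s + del -> forall i, (i <= n)%nat -> Rabs (G z i) <= K).
  { intros z Hz i Hi. unfold G. destruct (Rlt_dec z s).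
    - pose proof (Hbd z ltac:(lra) i Hi). unfold K; lra.
    - apply Hboxv; auto. intros j Hj. apply (Hphi z ltac:(lra) j Hj). }
  assert (HGcont : forall z, a0 < z < s + del -> forall i, (i <= n)%nat -> continuous (fun t => G t i) z).
  { intros z Hz i Hi. destruct (Rtotal_order z s) as [Hzs|[Hzs|Hzs]].
    - apply (cext_loc (fun t => old t i)). exists (s - z). split. lra. intros y Hy.
      unfold G. destruct (Rlt_dec y s); [reflexivity|]. exfalso. apply abs_lt_inv in Hy. lra.
      apply (is_derive_cont _ z _ (Hold z ltac:(lra) i Hi)).
    - subst z. apply eps_cont. intros eps He.
      destruct (Hell i Hi (eps/2) ltac:(lra)) as [eta [Heta Heta2]].
      destruct (cont_eps _ s (proj1 (proj2 (Hphi s ltac:(lra) i Hi))) (eps/2) ltac:(lra)) as [d2 [Hd2 Hd22]].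
      exists (Rmin eta d2). split. apply Rmin_pos; auto. intros y Hy.
      pose proof (Rmin_l eta d2). pose proof (Rmin_r eta d2). apply abs_lt_inv in Hy.
      unfold G. destruct (Rlt_dec s s) as [Hss|_]; [lra|]. rewrite (Hphis i Hi).
      destruct (Rlt_dec y s).
      + destruct (Heta2 y ltac:(lra)) as [_ H3]. lra.
      + rewrite <- (Hphis i Hi). assert (Rabs (phi y i - phi s i) < eps / 2) by (apply Hd22; apply Rabs_def1; lra). lra.
    - apply (cext_loc (fun t => phi t i)). exists (z - s). split. lra. intros y Hy. apply abs_lt_inv in Hy.
      unfold G. destruct (Rlt_dec y s); [lra|reflexivity].
      apply (Hphi z ltac:(lra) i Hi). }
  assert (HFGc : forall i, (i <= n)%nat -> forall z, a0 < z < s + del -> continuous (fun t => Fs n k cb (G t) i) z).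
  { intros i Hi z Hz. apply Fs_cont; auto. }
  assert (HFGb : forall i, (i <= n)%nat -> forall z, a0 < z < s + del -> Rabs (Fs n k cb (G z) i) <= M).
  { intros i Hi z Hz. apply Fs_bound; auto. }
  assert (Hs0 : a0 < s < s + del) by lra.
  assert (HIE : forall i, (i <= n)%nat -> forall z, a0 < z < s + del ->
             G z i = ell i + RInt (fun t => Fs n k cb (G t) i) s z).
  { intros i Hi z Hz.
    pose proof (int_facts _ s a0 (s + del) M (HFGc i Hi) (HFGb i Hi) Hs0) as IF.
    destruct (Rlt_dec z s) as [Hzs|Hzs].
    - set (P := fun y => old y i - RInt (fun t => Fs n k cb (G t) i) s y).
      assert (HPc : forall y, z <= y < s -> P z = P y).
      { intros y Hy. apply (const_on P (fun x => Fs n k cb (old x) i - Fs n k cb (G x) i) z y). lra.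
        - intros x Hx. apply dminus. apply Hold; auto; lra. apply (IF x ltac:(lra)).
        - intros x Hx. unfold G. destruct (Rlt_dec x s); [|lra]. apply Rminus_diag_eq. reflexivity. }
      assert (HPz : P z - ell i = 0).
      { apply zero_of_eps. intros eps He. destruct (Hell i Hi (eps/2) ltac:(lra)) as [eta [Heta H]].
        assert (Hr : 0 < Rmin (s - z) (Rmin eta (eps / (2 * M)))).
        { apply Rmin_pos. lra. apply Rmin_pos. lra. apply Rdiv_lt_0_compat; lra. }
        set (r := Rmin (s - z) (Rmin eta (eps / (2 * M))) / 2).
        pose proof (Rmin_l (s - z) (Rmin eta (eps / (2 * M)))). pose proof (Rmin_r (s - z) (Rmin eta (eps / (2 * M)))).
        pose proof (Rmin_l eta (eps / (2 * M))). pose proof (Rmin_r eta (eps / (2 * M))).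
        rewrite (HPc (s - r)) by (unfold r; lra).
        destruct (H (s - r) ltac:(unfold r; lra)) as [_ H2x].
        destruct (IF (s - r) ltac:(unfold r; lra)) as [_ [H3x _]].
        unfold P. replace (old (s - r) i - RInt (fun t : R => Fs n k cb (G t) i) s (s - r) - ell i)
          with ((old (s - r) i - ell i) - RInt (fun t : R => Fs n k cb (G t) i) s (s - r)) by ring.
        eapply Rle_trans. apply Rabs_triang. rewrite Rabs_Ropp.
        replace (s - r - s) with (- r) in H3x by ring. rewrite Rabs_Ropp in H3x. rewrite (Rabs_right r) in H3x by (unfold r; lra).
        assert (M * r <= M * (eps / (2 * M) / 2)) by (apply Rmult_le_compat_l; unfold r; lra).
        assert (M * (eps / (2 * M) / 2) = eps / 4) by (field; lra). eapply Rle_trans; [apply Rplus_le_compat; [exact H2x|exact H3x]|lra]. }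
      unfold P in HPz. unfold G at 1. destruct (Rlt_dec z s); [|lra]. lra.
    - unfold G at 1. destruct (Rlt_dec z s) as [|_]; [lra|].
      destruct (Hphi z ltac:(lra) i Hi) as [_ [_ Hie]]. rewrite Hie. f_equal.
      apply RInt_ext. intros x Hx. unfold Rmin, Rmax in Hx. destruct (Rle_dec s z); [|lra].
      unfold G. destruct (Rlt_dec x s); [lra|reflexivity]. }
  assert (HGder : forall i, (i <= n)%nat -> forall z, s <= z < s + del ->
             is_derive (fun t => G t i) z (Fs n k cb (G z) i)).
  { intros i Hi z Hz. pose proof (int_facts _ s a0 (s + del) M (HFGc i Hi) (HFGb i Hi) Hs0) as IF.
    apply (is_derive_ext_loc (fun t => ell i + RInt (fun t => Fs n k cb (G t) i) s t)).
    - assert (Hp : 0 < Rmin (z - a0) (s + del - z)) by (apply Rmin_pos; lra).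
      exists (mkposreal _ Hp). intros y Hy. change (Rabs (y - z) < Rmin (z - a0) (s + del - z)) in Hy.
      pose proof (Rmin_l (z - a0) (s + del - z)). pose proof (Rmin_r (z - a0) (s + del - z)).
      apply abs_lt_inv in Hy. symmetry. apply HIE; auto. lra.
    - apply (dext _ _ (0 + Fs n k cb (G z) i)). apply dplus. apply dconst. apply (IF z ltac:(lra)). ring. }
  exists (s + del). split. lra. exists lam', rho'. split.
  - split; [|split; [|split; [|split]]].
    + unfold rho'. destruct (Rlt_dec 0 s); [exact Hr0|lra].
    + intros i Hi. unfold lam'. destruct (Rlt_dec 0 s); [apply Hl0; auto|lra].
    + apply (filterlim_ext_loc rho). exists (mkposreal s ltac:(lra)). intros y Hy Hy0.
      change (Rabs (y - 0) < s) in Hy. apply abs_lt_inv in Hy. unfold rho'. destruct (Rlt_dec y s); [reflexivity|lra].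
      exact Hrl.
    + intros i Hi. apply (filterlim_ext_loc (lam i)). exists (mkposreal s ltac:(lra)). intros y Hy Hy0.
      change (Rabs (y - 0) < s) in Hy. apply abs_lt_inv in Hy. unfold lam'. destruct (Rlt_dec y s); [reflexivity|lra].
      apply Hll; auto.
    + intros t Ht. destruct (Rlt_dec t s) as [Hts|Hts].
      * assert (Hloc : forall (f g : R -> R), (forall y, y < s -> f y = g y) -> locally t (fun y => f y = g y)).
        { intros f g Hfg. exists (mkposreal (s - t) ltac:(lra)). intros y Hy. change (Rabs (y - t) < s - t) in Hy.
          apply abs_lt_inv in Hy. apply Hfg. lra. }
        destruct (Hder t ltac:(lra)) as [Hl Hr]. split.
        -- intros i Hi. apply (is_derive_ext_loc (lam i)).
           apply Hloc. intros y Hy. unfold lam'. destruct (Rlt_dec y s); [reflexivity|lra].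
           apply (dext _ _ _ _ (Hl i Hi)). unfold lam', rho'. destruct (Rlt_dec t s); [reflexivity|lra].
        -- apply (is_derive_ext_loc rho).
           apply Hloc. intros y Hy. unfold rho'. destruct (Rlt_dec y s); [reflexivity|lra].
           apply (dext _ _ _ _ Hr). unfold lam_sum, lam', rho'. destruct (Rlt_dec t s); [reflexivity|lra].
      * assert (Hts' : s <= t < s + del) by lra. split.
        -- intros i Hi. destruct i as [|i']; [lia|].
           apply (is_derive_ext (fun y => G y (S i'))). intros y. unfold G, lam'. destruct (Rlt_dec y s); reflexivity.
           apply (dext _ _ _ _ (HGder (S i') ltac:(lia) t Hts')). reflexivity.
        -- apply (is_derive_ext (fun y => G y O)). intros y. unfold G, rho'. destruct (Rlt_dec y s); reflexivity.
           apply (dext _ _ _ _ (HGder O ltac:(lia) t Hts')). reflexivity.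
  - intros t Ht. unfold rho', lam'. destruct (Rlt_dec t s); [|lra]. split; [reflexivity|]. intros; reflexivity.
Qed.

Definition gg (lam0 : nat -> R) (lam : nat -> R -> R) (i : nat) (t : R) : R :=
  if Rle_dec t 0 then lam0 i else lam i t.
Definition ut lam0 lam i t := exp (RInt (gg lam0 lam i) 0 t).
Definition dut lam0 lam i t := gg lam0 lam i t * ut lam0 lam i t.
Definition rt (rho0 : R) (rho : R -> R) (t : R) : R := if Rle_dec t 0 then rho0 else rho t.

Lemma loc_right_ext (f g : R -> R) t : 0 < t -> (forall y, 0 < y -> f y = g y) ->
  exists e, 0 < e /\ forall y, Rabs (y - t) < e -> f y = g y.
Proof. intros Ht H. exists t. split; auto. intros y Hy. apply abs_lt_inv in Hy. apply H. lra. Qed.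

Lemma locally_of (f g : R -> R) t : (exists e, 0 < e /\ forall y, Rabs (y - t) < e -> f y = g y) ->
  locally t (fun y => f y = g y).
Proof. intros [e [He H]]. exists (mkposreal e He). intros y Hy. apply H. exact Hy. Qed.

Lemma filter_right (f : R -> R) l : filterlim f (at_right 0) (locally l) ->
  forall eps, 0 < eps -> exists d, 0 < d /\ forall y, 0 < y < d -> Rabs (f y - l) < eps.
Proof.
  intros H eps He. destruct (proj1 (filterlim_locally f l) H (mkposreal eps He)) as [d Hd].
  exists d. split. apply cond_pos. intros y Hy. apply (Hd y). change (Rabs (y - 0) < d). rewrite Rminus_0_r, Rabs_right; lra. lra.
Qed.

Lemma right_glue_cont (f : R -> R) l : filterlim f (at_right 0) (locally l) ->
  continuous (fun t => if Rle_dec t 0 then l else f t) 0.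
Proof.
  intros H. apply eps_cont. intros eps He. destruct (filter_right f l H eps He) as [d [Hd H1]].
  exists d. split; auto. intros y Hy. destruct (Rle_dec 0 0) as [_|]; [|lra].
  destruct (Rle_dec y 0). rewrite Rminus_diag, Rabs_R0; lra. apply H1. apply abs_lt_inv in Hy. lra.
Qed.


Lemma gg_cont n k cb rho0 lam0 s lam rho i : is_sol n k cb rho0 lam0 s lam rho -> (1 <= i <= n)%nat ->
  forall t, t < s -> continuous (gg lam0 lam i) t.
Proof.
  intros [Hr0 [Hl0 [Hrl [Hll Hder]]]] Hi t Ht. destruct (Rtotal_order t 0) as [H|[H|H]].
  - apply (cext_loc (fun _ => lam0 i)). exists (- t). split. lra. intros y Hy. apply abs_lt_inv in Hy.
    unfold gg. destruct (Rle_dec y 0); [reflexivity|lra]. apply cconst.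
  - subst t. apply (right_glue_cont (lam i) (lam0 i)). apply Hll; auto.
  - apply (cext_loc (lam i)). apply loc_right_ext; auto. intros y Hy. unfold gg. destruct (Rle_dec y 0); [lra|reflexivity].
    destruct (Hder t ltac:(lra)) as [Hl _]. apply (is_derive_cont _ _ _ (Hl i Hi)).
Qed.

Lemma gg_der n k cb rho0 lam0 s lam rho i : is_sol n k cb rho0 lam0 s lam rho -> (1 <= i <= n)%nat ->
  forall t, 0 < t < s -> is_derive (gg lam0 lam i) t (- (gg lam0 lam i t) ^ 2 + k / INR n * (rho t - cb)).
Proof.
  intros [Hr0 [Hl0 [Hrl [Hll Hder]]]] Hi t Ht.
  apply (is_derive_ext_loc (lam i)). apply locally_of. apply loc_right_ext. lra.
  intros y Hy. unfold gg. destruct (Rle_dec y 0); [lra|reflexivity].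
  destruct (Hder t Ht) as [Hl _]. apply (dext _ _ _ _ (Hl i Hi)). unfold gg. destruct (Rle_dec t 0); [lra|reflexivity].
Qed.

Lemma ut_der n k cb rho0 lam0 s lam rho i : is_sol n k cb rho0 lam0 s lam rho -> 0 < s -> (1 <= i <= n)%nat ->
  forall t, t < s -> is_derive (ut lam0 lam i) t (dut lam0 lam i t) /\ ex_RInt (gg lam0 lam i) 0 t.
Proof.
  intros Hsol Hs Hi t Ht.
  assert (Hc : forall z, Rmin t 0 - 1 < z < (Rmax t 0 + s) / 2 -> continuous (gg lam0 lam i) z).
  { intros z Hz. apply (gg_cont n k cb rho0 lam0 s lam rho i Hsol Hi). unfold Rmax in Hz. destruct (Rle_dec t 0); lra. }
  assert (H0 : Rmin t 0 - 1 < 0 < (Rmax t 0 + s) / 2).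
  { unfold Rmin, Rmax. destruct (Rle_dec t 0); lra. }
  destruct (int_deriv _ 0 _ _ Hc H0 t) as [H1 H2].
  { unfold Rmin, Rmax. destruct (Rle_dec t 0); lra. }
  split; auto. unfold ut, dut. apply (dexp _ _ _ H2).
Qed.

Lemma ut_pos lam0 lam i t : 0 < ut lam0 lam i t.
Proof. apply exp_pos. Qed.

Lemma ut_0 lam0 lam i : ut lam0 lam i 0 = 1.
Proof. unfold ut. rewrite RInt_point. apply exp_0. Qed.

Lemma ut_cont n k cb rho0 lam0 s lam rho i : is_sol n k cb rho0 lam0 s lam rho -> 0 < s -> (1 <= i <= n)%nat ->
  forall t, t < s -> continuous (ut lam0 lam i) t.
Proof. intros Hsol Hs Hi t Ht. apply (is_derive_cont _ _ _ (proj1 (ut_der n k cb rho0 lam0 s lam rho i Hsol Hs Hi t Ht))). Qed.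

Lemma dut_der n k cb rho0 lam0 s lam rho i : is_sol n k cb rho0 lam0 s lam rho -> 0 < s -> (1 <= i <= n)%nat ->
  forall t, 0 < t < s -> is_derive (dut lam0 lam i) t (k / INR n * (rho t - cb) * ut lam0 lam i t).
Proof.
  intros Hsol Hs Hi t Ht. unfold dut at 1.
  apply (dext _ _ _ _ (dmult _ _ _ _ _ (gg_der n k cb rho0 lam0 s lam rho i Hsol Hi t Ht)
     (proj1 (ut_der n k cb rho0 lam0 s lam rho i Hsol Hs Hi t ltac:(lra))))).
  unfold dut. simpl. ring.
Qed.

Lemma wronsk n k cb rho0 lam0 s lam rho i1 i2 : is_sol n k cb rho0 lam0 s lam rho -> 0 < s ->
  (1 <= i1 <= n)%nat -> (1 <= i2 <= n)%nat ->
  forall t, 0 <= t < s -> ut lam0 lam i1 t * ut lam0 lam i2 t * (gg lam0 lam i2 t - gg lam0 lam i1 t) = lam0 i2 - lam0 i1.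
Proof.
  intros Hsol Hs H1 H2 t Ht.
  set (W := fun t => ut lam0 lam i1 t * ut lam0 lam i2 t * (gg lam0 lam i2 t - gg lam0 lam i1 t)).
  change (W t = lam0 i2 - lam0 i1).
  assert (W 0 = lam0 i2 - lam0 i1).
  { unfold W. rewrite !ut_0. unfold gg. destruct (Rle_dec 0 0); [ring|lra]. }
  rewrite <- H. symmetry.
  apply (const_on' W (fun _ => 0) 0 t). lra.
  - intros x Hx. unfold W.
    pose proof (proj1 (ut_der n k cb rho0 lam0 s lam rho i1 Hsol Hs H1 x ltac:(lra))) as D1.
    pose proof (proj1 (ut_der n k cb rho0 lam0 s lam rho i2 Hsol Hs H2 x ltac:(lra))) as D2.
    pose proof (gg_der n k cb rho0 lam0 s lam rho i1 Hsol H1 x ltac:(lra)) as G1.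
    pose proof (gg_der n k cb rho0 lam0 s lam rho i2 Hsol H2 x ltac:(lra)) as G2.
    apply (dext _ _ _ _ (dmult _ _ _ _ _ (dmult _ _ _ _ _ D1 D2) (dminus _ _ _ _ _ G2 G1))).
    unfold dut. ring.
  - intros x Hx. unfold W. apply cmult. apply cmult.
    apply (ut_cont n k cb rho0 lam0 s lam rho i1); auto; lra.
    apply (ut_cont n k cb rho0 lam0 s lam rho i2); auto; lra.
    apply cminus. apply (gg_cont n k cb rho0 lam0 s lam rho i2); auto; lra.
    apply (gg_cont n k cb rho0 lam0 s lam rho i1); auto; lra.
  - intros; reflexivity.
Qed.

Lemma RI_der n k cb rho0 lam0 s lam rho i : is_sol n k cb rho0 lam0 s lam rho -> 0 < s -> (1 <= i <= n)%nat ->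
  forall t, t < s -> is_derive (fun t => RInt (gg lam0 lam i) 0 t) t (gg lam0 lam i t).
Proof.
  intros Hsol Hs Hi t Ht.
  assert (Hc : forall z, Rmin t 0 - 1 < z < (Rmax t 0 + s) / 2 -> continuous (gg lam0 lam i) z).
  { intros z Hz. apply (gg_cont n k cb rho0 lam0 s lam rho i Hsol Hi). unfold Rmax in Hz. destruct (Rle_dec t 0); lra. }
  assert (H0 : Rmin t 0 - 1 < 0 < (Rmax t 0 + s) / 2).
  { unfold Rmin, Rmax. destruct (Rle_dec t 0); lra. }
  destruct (int_deriv _ 0 _ _ Hc H0 t) as [H1 H2].
  { unfold Rmin, Rmax. destruct (Rle_dec t 0); lra. }
  exact H2.
Qed.

Definition Lam (n : nat) lam0 lam t := sum_f_R0 (fun m => RInt (gg lam0 lam (S m)) 0 t) (pred n).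

Lemma Lam_der n k cb rho0 lam0 s lam rho : is_sol n k cb rho0 lam0 s lam rho -> 0 < s -> (1 <= n)%nat ->
  forall t, t < s -> is_derive (Lam n lam0 lam) t (sum_f_R0 (fun m => gg lam0 lam (S m) t) (pred n)).
Proof.
  intros Hsol Hs Hn t Ht. unfold Lam.
  assert (forall N, (N <= pred n)%nat -> is_derive (fun t => sum_f_R0 (fun m => RInt (gg lam0 lam (S m)) 0 t) N) t
             (sum_f_R0 (fun m => gg lam0 lam (S m) t) N)).
  { induction N; intros HN; simpl.
    - apply (RI_der n k cb rho0 lam0 s lam rho 1); auto; lia.
    - apply dplus. apply IHN; lia. apply (RI_der n k cb rho0 lam0 s lam rho (S (S N))); auto; lia. }
  apply H; lia.
Qed.

Lemma Lam_0 n lam0 lam : Lam n lam0 lam 0 = 0.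
Proof.
  unfold Lam. induction (pred n); simpl. rewrite RInt_point. reflexivity. rewrite IHn0, RInt_point. unfold zero; simpl. ring.
Qed.

Lemma rho_eq n k cb rho0 lam0 s lam rho : is_sol n k cb rho0 lam0 s lam rho -> 0 < s -> (1 <= n)%nat ->
  forall t, 0 < t < s -> rho t = rho0 * exp (- Lam n lam0 lam t).
Proof.
  intros Hsol Hs Hn t Ht. pose proof Hsol as [Hr0 [Hl0 [Hrl [Hll Hder]]]].
  set (Q := fun t => rt rho0 rho t * exp (Lam n lam0 lam t)).
  assert (HQ : Q 0 = Q t).
  { apply (const_on' Q (fun _ => 0) 0 t). lra.
    - intros x Hx. unfold Q.
      assert (Dr : is_derive (rt rho0 rho) x (- rho x * lam_sum n lam x)).
      { apply (is_derive_ext_loc rho). apply locally_of. apply loc_right_ext. lra.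
        intros y Hy. unfold rt. destruct (Rle_dec y 0); [lra|reflexivity].
        apply (Hder x ltac:(lra)). }
      pose proof (dexp _ _ _ (Lam_der n k cb rho0 lam0 s lam rho Hsol Hs Hn x ltac:(lra))) as DL.
      apply (dext _ _ _ _ (dmult _ _ _ _ _ Dr DL)).
      unfold rt, lam_sum. destruct (Rle_dec x 0); [lra|].
      rewrite (sum_eq (fun m => gg lam0 lam (S m) x) (fun i => lam (S i) x)). ring.
      intros m Hm. unfold gg. destruct (Rle_dec x 0); [lra|reflexivity].
    - intros x Hx. unfold Q. apply cmult.
      + destruct (Rle_lt_or_eq_dec 0 x ltac:(lra)) as [Hx0|Hx0].
        * apply (cext_loc rho). apply loc_right_ext; auto. intros y Hy. unfold rt. destruct (Rle_dec y 0); [lra|reflexivity].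
          apply (is_derive_cont _ _ _ (proj2 (Hder x ltac:(lra)))).
        * subst x. apply (right_glue_cont rho rho0 Hrl).
      + apply (is_derive_cont _ _ _ (dexp _ _ _ (Lam_der n k cb rho0 lam0 s lam rho Hsol Hs Hn x ltac:(lra)))).
    - intros; reflexivity. }
  unfold Q, rt in HQ. rewrite Lam_0, exp_0 in HQ. destruct (Rle_dec 0 0); [|lra]. destruct (Rle_dec t 0); [lra|].
  rewrite exp_Ropp. pose proof (exp_pos (Lam n lam0 lam t)). rewrite Rmult_1_r in HQ. rewrite HQ. field. lra.
Qed.

Lemma rho_pos n k cb rho0 lam0 s lam rho : is_sol n k cb rho0 lam0 s lam rho -> 0 < s -> (1 <= n)%nat -> 0 < rho0 ->
  forall t, 0 < t < s -> 0 < rho t.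
Proof. intros. rewrite (rho_eq n k cb rho0 lam0 s lam rho); auto. apply Rmult_lt_0_compat; auto. apply exp_pos. Qed.

Lemma gg_order n k cb rho0 lam0 s lam rho i1 i2 : is_sol n k cb rho0 lam0 s lam rho -> 0 < s ->
  (1 <= i1 <= n)%nat -> (1 <= i2 <= n)%nat -> lam0 i1 <= lam0 i2 ->
  forall t, 0 <= t < s -> gg lam0 lam i1 t <= gg lam0 lam i2 t.
Proof.
  intros Hsol Hs H1 H2 Hl t Ht. pose proof (wronsk n k cb rho0 lam0 s lam rho i1 i2 Hsol Hs H1 H2 t Ht).
  pose proof (ut_pos lam0 lam i1 t). pose proof (ut_pos lam0 lam i2 t).
  assert (0 < ut lam0 lam i1 t * ut lam0 lam i2 t) by (apply Rmult_lt_0_compat; auto).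
  destruct (Rle_or_lt (gg lam0 lam i1 t) (gg lam0 lam i2 t)); auto. nra.
Qed.

Lemma rho_le n k cb rho0 lam0 s lam rho : is_sol n k cb rho0 lam0 s lam rho -> 0 < s -> (1 <= n)%nat -> 0 < rho0 ->
  (forall i, (1 <= i <= n)%nat -> lam0 1%nat <= lam0 i) ->
  forall t, 0 < t < s -> rho t <= rho0 * exp (- (INR n * RInt (gg lam0 lam 1%nat) 0 t)).
Proof.
  intros Hsol Hs Hn Hr Hord t Ht. rewrite (rho_eq n k cb rho0 lam0 s lam rho); auto.
  apply Rmult_le_compat_l. lra. apply exp_le'. apply Ropp_le_contravar. unfold Lam.
  replace (INR n * RInt (gg lam0 lam 1) 0 t) with (sum_f_R0 (fun _ => RInt (gg lam0 lam 1%nat) 0 t) (pred n)).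
  2:{ rewrite sum_cte. replace (S (pred n)) with n by lia. ring. }
  apply sum_Rle. intros m Hm.
  apply RInt_le. lra.
  - apply (proj2 (ut_der n k cb rho0 lam0 s lam rho 1 Hsol Hs ltac:(lia) t ltac:(lra))).
  - apply (proj2 (ut_der n k cb rho0 lam0 s lam rho (S m) Hsol Hs ltac:(lia) t ltac:(lra))).
  - intros x Hx. apply (gg_order n k cb rho0 lam0 s lam rho); auto; try lia; try lra. apply Hord; lia.
Qed.

Lemma dopp (f : R -> R) x df : is_derive f x df -> is_derive (fun t => - f t) x (- df).
Proof. intros H. exact (is_derive_opp f x df H). Qed.

Lemma no_lower n k cb rho0 lam0 s lam rho : maximal_sol n k cb rho0 lam0 s lam rho -> 0 < s -> (1 <= n)%nat ->
  0 < k -> 0 < cb -> 0 < rho0 -> (forall i, (1 <= i <= n)%nat -> lam0 1%nat <= lam0 i) ->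
  forall t0 m, 0 < t0 < s -> 0 < m -> (forall t, t0 < t < s -> m <= ut lam0 lam 1%nat t) -> False.
Proof.
  intros [Hsol Hno] Hs Hn Hk Hcb Hr0 Hord t0 m Ht0 Hm Hlow.
  assert (HnR : 0 < INR n) by (apply lt_0_INR; lia).
  set (ka := k / INR n). assert (Hka : 0 < ka) by (unfold ka; apply Rdiv_lt_0_compat; auto).
  set (t1 := (t0 + s) / 2).
  set (R0 := rho0 * exp (- (INR n * ln m))).
  assert (HR : forall t, t0 < t < s -> 0 < rho t <= R0).
  { intros t Ht. split. apply (rho_pos n k cb rho0 lam0 s lam rho); auto; lra.
    eapply Rle_trans. apply (rho_le n k cb rho0 lam0 s lam rho); auto; lra.
    apply Rmult_le_compat_l. lra. apply exp_le'. apply Ropp_le_contravar. apply Rmult_le_compat_l. lra.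
    rewrite <- (ln_exp (RInt (gg lam0 lam 1) 0 t)). apply ln_le; auto. apply Hlow; auto. }
  set (Bsq := ka * R0 + 1).
  assert (HB1 : 1 <= Bsq). { unfold Bsq. assert (0 < R0) by (unfold R0; apply Rmult_lt_0_compat; [lra|apply exp_pos]). nra. }
  assert (Hup : forall i, (1 <= i <= n)%nat -> forall t, t1 <= t < s -> gg lam0 lam i t <= Rmax (gg lam0 lam i t1) Bsq).
  { intros i Hi t Ht.
    assert (H := barrier (fun x => - gg lam0 lam i x) (fun x => - (- (gg lam0 lam i x) ^ 2 + k / INR n * (rho x - cb)))
                   t1 t (- Rmax (gg lam0 lam i t1) Bsq) ltac:(lra)).
    cut (- Rmax (gg lam0 lam i t1) Bsq <= - gg lam0 lam i t). lra. apply H.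
    - intros x Hx. apply dopp. apply (gg_der n k cb rho0 lam0 s lam rho i Hsol Hi). unfold t1 in *; lra.
    - intros x Hx Hlt. assert (Hg : Bsq < gg lam0 lam i x) by (pose proof (Rmax_r (gg lam0 lam i t1) Bsq); lra).
      destruct (HR x ltac:(unfold t1 in *; lra)) as [Hr1 Hr2]. fold ka.
      assert (ka * (rho x - cb) <= ka * R0) by (apply Rmult_le_compat_l; lra).
      assert (Bsq * Bsq < gg lam0 lam i x ^ 2) by (simpl; nra).
      assert (Bsq <= Bsq * Bsq) by nra. unfold Bsq in *. nra.
    - pose proof (Rmax_l (gg lam0 lam i t1) Bsq). lra.
    - lra. }
  set (U := sum_f_R0 (fun m => Rabs (gg lam0 lam (S m) t1)) (pred n) + Bsq).
  assert (HU : forall i, (1 <= i <= n)%nat -> forall t, t1 <= t < s -> gg lam0 lam i t <= U).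
  { intros i Hi t Ht. eapply Rle_trans. apply Hup; auto. apply Rmax_lub.
    - pose proof (comp_le_nrm (pred n) (fun m => gg lam0 lam (S m) t1) (pred i) ltac:(lia)). unfold nrm in H.
      replace (S (pred i)) with i in H by lia. pose proof (Rle_abs (gg lam0 lam i t1)). unfold U; lra.
    - unfold U. pose proof (sum_nonneg (fun m => Rabs (gg lam0 lam (S m) t1)) (pred n) (fun m => Rabs_pos _)). lra. }
  set (X := exp (RInt (gg lam0 lam 1) 0 t1 + Rabs U * s)).
  assert (HX : forall t, t1 <= t < s -> ut lam0 lam 1%nat t <= X).
  { intros t Ht. unfold ut, X. apply exp_le'.
    assert (U * t1 - RInt (gg lam0 lam 1) 0 t1 <= U * t - RInt (gg lam0 lam 1) 0 t).
    { apply (mono_le (fun x => U * x - RInt (gg lam0 lam 1) 0 x) (fun x => U * 1 - gg lam0 lam 1%nat x)). lra.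
      intros x Hx. apply dminus. apply is_derive_scal. apply did. apply (RI_der n k cb rho0 lam0 s lam rho 1); [exact Hsol|exact Hs|lia|lra].
      intros x Hx. assert (gg lam0 lam 1 x <= U) by (apply HU; [lia|lra]). lra. }
    assert (U * (t - t1) <= Rabs U * s).
    { pose proof (Rle_abs U). pose proof (Rabs_pos U). unfold t1 in *.
      assert (0 <= t - (t0 + s)/2) by lra. assert (t - (t0+s)/2 <= s) by lra. destruct (Rle_or_lt 0 U). rewrite Rabs_right in * by lra. nra. rewrite Rabs_left in * by lra. nra. }
    lra. }
  set (a := ka * cb). assert (Ha : 0 < a) by (unfold a; nra).
  assert (HXp : 0 < X) by apply exp_pos.
  set (D0 := dut lam0 lam 1%nat t1 - a * X * s).
  assert (Hdx : forall t, t1 <= t < s -> D0 <= dut lam0 lam 1%nat t).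
  { intros t Ht.
    assert (dut lam0 lam 1 t1 + a * X * t1 <= dut lam0 lam 1 t + a * X * t).
    { apply (mono_le (fun x => dut lam0 lam 1 x + a * X * x) (fun x => k / INR n * (rho x - cb) * ut lam0 lam 1 x + a * X * 1)). lra.
      intros x Hx. apply dplus. apply (dut_der n k cb rho0 lam0 s lam rho 1); auto; try lia. unfold t1 in *; lra.
      apply is_derive_scal. apply did.
      intros x Hx. destruct (HR x ltac:(unfold t1 in *; lra)) as [Hr1 _]. pose proof (HX x ltac:(lra)).
      pose proof (ut_pos lam0 lam 1 x).
      assert (Hf : 0 <= k / INR n * (rho x - cb) + a) by (replace (k / INR n * (rho x - cb) + a) with (ka * rho x) by (unfold a, ka; ring); apply Rmult_le_pos; lra).
      assert (0 <= (k / INR n * (rho x - cb) + a) * ut lam0 lam 1 x) by (apply Rmult_le_pos; lra).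
      assert (0 <= a * (X - ut lam0 lam 1 x)) by (apply Rmult_le_pos; lra). nra. }
    unfold D0. assert (a * X * (t - t1) <= a * X * s) by (apply Rmult_le_compat_l; [nra|unfold t1 in *; lra]). nra. }
  set (Low := Rmin D0 0 / m).
  assert (HLow : Low <= 0). { pose proof (Rmin_r D0 0). assert (Low * m = Rmin D0 0) by (unfold Low; field; lra). nra. }
  assert (Hg1 : forall t, t1 <= t < s -> Low <= gg lam0 lam 1%nat t).
  { intros t Ht. pose proof (Hdx t Ht). pose proof (Rmin_l D0 0). pose proof (Hlow t ltac:(unfold t1 in *; lra)).
    assert (HLm : Low * m = Rmin D0 0) by (unfold Low; field; lra).
    unfold dut in H. destruct (Rle_or_lt Low (gg lam0 lam 1 t)); auto.
    pose proof (ut_pos lam0 lam 1 t). nra. }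
  set (K0 := Rabs U + Rabs Low + R0).
  assert (HR0 : 0 < R0) by (unfold R0; apply Rmult_lt_0_compat; [lra|apply exp_pos]).
  destruct (extend n k cb rho0 lam0 s lam rho t1 K0 Hn ltac:(unfold t1; lra)) as [T [HT Hex]].
  { unfold K0. pose proof (Rabs_pos U). pose proof (Rabs_pos Low). lra. }
  { exact Hsol. }
  { intros t Ht. split.
    - destruct (HR t ltac:(unfold t1 in *; lra)). rewrite Rabs_right by lra. unfold K0. pose proof (Rabs_pos U). pose proof (Rabs_pos Low). lra.
    - intros i Hi. replace (lam i t) with (gg lam0 lam i t) by (unfold gg; destruct (Rle_dec t 0); [unfold t1 in *; lra|reflexivity]).
      pose proof (HU i Hi t ltac:(lra)).
      pose proof (gg_order n k cb rho0 lam0 s lam rho 1 i Hsol Hs ltac:(lia) Hi (Hord i Hi) t ltac:(unfold t1 in *; lra)).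
      pose proof (Hg1 t ltac:(lra)). apply Rabs_le. pose proof (Rle_abs U). pose proof (Rle_abs (- Low)) as HL2. rewrite Rabs_Ropp in HL2.
      unfold K0. pose proof (Rabs_pos U). lra. }
  apply (Hno T HT). exact Hex.
Qed.

Lemma u_eq lam0 lam i t : 0 <= t -> u lam i t = ut lam0 lam i t.
Proof.
  intros Ht. unfold u, ut. f_equal. apply RInt_ext. intros x Hx.
  rewrite Rmin_left, Rmax_right in Hx by lra. unfold gg. destruct (Rle_dec x 0); [lra|reflexivity].
Qed.

Lemma Derive_u n k cb rho0 lam0 s lam rho i : is_sol n k cb rho0 lam0 s lam rho -> 0 < s -> (1 <= i <= n)%nat ->
  forall t, 0 < t < s -> Derive (u lam i) t = dut lam0 lam i t.
Proof.
  intros Hsol Hs Hi t Ht. rewrite (Derive_ext_loc _ (ut lam0 lam i)).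
  apply is_derive_unique. apply (ut_der n k cb rho0 lam0 s lam rho i Hsol Hs Hi t ltac:(lra)).
  apply locally_of. exists t. split. lra. intros y Hy. apply abs_lt_inv in Hy. apply u_eq. lra.
Qed.

Lemma cos_lb th : 0 <= th <= 1 -> cos 1 <= cos th /\ 0 < cos 1.
Proof.
  intros Hth. pose proof PI2_1. split.
  - destruct (Req_dec th 1) as [->|Hne]. lra. left. apply cos_decreasing_1; lra.
  - apply cos_gt_0; lra.
Qed.

Lemma sturm (x dx f : R -> R) (om t2 t : R) : 0 < om -> t2 <= t -> om * (t - t2) <= 1 ->
  (forall z, t2 <= z <= t -> is_derive x z (dx z) /\ is_derive dx z (f z * x z) /\ 0 < x z /\ - (om * om) <= f z) ->
  0 < dx t2 -> x t2 * cos 1 <= x t.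
Proof.
  intros Hom Ht Hw Hz Hdx.
  set (x2 := x t2).
  assert (Hx2 : 0 < x2) by (apply (Hz t2); lra).
  set (zz := fun s => x2 * cos (om * (s - t2))).
  set (dz := fun s => - (x2 * (om * sin (om * (s - t2))))).
  assert (Dz : forall s, is_derive zz s (dz s)).
  { intros s. unfold zz, dz. auto_derive. trivial. unfold Rminus. ring. }
  assert (Ddz : forall s, is_derive dz s (- (om * om) * zz s)).
  { intros s. unfold zz, dz. auto_derive. trivial. unfold Rminus. ring. }
  assert (Hcz : forall s, t2 <= s <= t -> x2 * cos 1 <= zz s /\ 0 < zz s).
  { intros s Hs. assert (0 <= om * (s - t2) <= 1) by (split; [apply Rmult_le_pos; lra|]; assert (om * (s - t2) <= om * (t - t2)) by (apply Rmult_le_compat_l; lra); lra).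
    destruct (cos_lb _ H) as [H1 H2]. unfold zz. split. apply Rmult_le_compat_l; lra. apply Rmult_lt_0_compat; lra. }
  set (Q := fun s => (dx s - dz s) * zz s - (x s - zz s) * dz s).
  assert (HQ0 : Q t2 = dx t2 * x2).
  { unfold Q, zz, dz, x2. rewrite Rminus_diag, Rmult_0_r, cos_0, sin_0. ring. }
  assert (HQ : forall s, t2 <= s <= t -> Q t2 <= Q s).
  { intros s Hs. apply (mono_le Q (fun s => zz s * x s * (f s + om * om)) t2 s). lra.
    - intros r Hr. destruct (Hz r ltac:(lra)) as [D1 [D2 _]]. unfold Q.
      apply (dext _ _ _ _ (dminus _ _ _ _ _ (dmult _ _ _ _ _ (dminus _ _ _ _ _ D2 (Ddz r)) (Dz r))
                                            (dmult _ _ _ _ _ (dminus _ _ _ _ _ D1 (Dz r)) (Ddz r)))).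
      ring.
    - intros r Hr. destruct (Hz r ltac:(lra)) as [_ [_ [H1 H2]]]. destruct (Hcz r ltac:(lra)).
      apply Rmult_le_pos. apply Rmult_le_pos; lra. lra. }
  set (Rq := fun s => (x s - zz s) / zz s).
  assert (Rq t2 <= Rq t).
  { apply (mono_le Rq (fun s => Q s / (zz s) ^ 2) t2 t). lra.
    - intros r Hr. destruct (Hz r ltac:(lra)) as [D1 _]. destruct (Hcz r Hr) as [_ Hzr]. unfold Rq.
      apply (dext _ _ _ _ (is_derive_div _ _ _ _ _ (dminus _ _ _ _ _ D1 (Dz r)) (Dz r) ltac:(lra))).
      unfold Q. reflexivity.
    - intros r Hr. destruct (Hcz r ltac:(lra)) as [_ Hzr]. pose proof (HQ r ltac:(lra)).
      apply Rdiv_le_0_compat. nra. apply pow_lt; lra. }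
  unfold Rq in H. replace (x t2 - zz t2) with 0 in H by (unfold zz, x2; rewrite Rminus_diag, Rmult_0_r, cos_0; ring).
  destruct (Hcz t ltac:(lra)) as [H1 H2]. unfold Rdiv in H. rewrite Rmult_0_l in H.
  assert (0 <= x t - zz t).
  { apply (Rmult_le_reg_r (/ zz t)). apply Rinv_0_lt_compat; auto. lra. }
  fold x2. lra.
Qed.

Lemma lam0_order (n J : nat) (lam0 : nat -> R) : (1 <= J <= n)%nat ->
  (forall i, (1 <= i <= J)%nat -> lam0 i = lam0 1%nat) ->
  ((J < n)%nat -> lam0 J < lam0 (S J)) ->
  (forall i, (J < i < n)%nat -> lam0 i <= lam0 (S i)) ->
  (forall i, (1 <= i <= n)%nat -> lam0 1%nat <= lam0 i) /\ (forall i, (J < i <= n)%nat -> lam0 1%nat < lam0 i).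
Proof.
  intros HJ Heq Hgap Hmono.
  assert (Hch : forall m, (J + 1 + m <= n)%nat -> lam0 (J + 1)%nat <= lam0 (J + 1 + m)%nat).
  { induction m; intros Hm. rewrite Nat.add_0_r. lra.
    eapply Rle_trans. apply IHm. lia. replace (J + 1 + S m)%nat with (S (J + 1 + m)) by lia. apply Hmono. lia. }
  assert (Hgt : forall i, (J < i <= n)%nat -> lam0 1%nat < lam0 i).
  { intros i Hi. rewrite <- (Heq J) by lia. eapply Rlt_le_trans. apply Hgap. lia.
    replace (S J) with (J + 1)%nat by lia. replace i with (J + 1 + (i - J - 1))%nat by lia. apply Hch. lia. }
  split; auto. intros i Hi. destruct (Nat.le_gt_cases i J). rewrite (Heq i) by lia. lra. left. apply Hgt. lia.
Qed.

Lemma analysis (x dx y dy f : R -> R) (s a c : R) :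
  0 < s -> 0 < a -> 0 < c ->
  (forall t, 0 < t < s -> is_derive x t (dx t) /\ is_derive y t (dy t) /\
       is_derive dx t (f t * x t) /\ is_derive dy t (f t * y t)) ->
  (forall t, 0 < t < s -> 0 < x t /\ 0 < y t /\ - a < f t) ->
  (forall t, 0 < t < s -> x t * dy t - dx t * y t = c) ->
  (forall t0 m, 0 < t0 < s -> 0 < m -> (forall t, t0 < t < s -> m <= x t) -> False) ->
  exists t1, 0 < t1 < s /\ (exists B, forall t, t1 <= t < s -> Rabs (dx t * y t) <= B) /\
    (forall eps, 0 < eps -> exists tau, t1 <= tau < s /\ forall t, tau < t < s -> x t * y t < eps).
Proof.
  intros Hs Ha Hc Hder Hpos Hw Hno.
  set (om := sqrt a). assert (Hom : 0 < om) by (apply sqrt_lt_R0; auto).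
  assert (Hom2 : om * om = a) by (apply sqrt_sqrt; lra).
  set (d0 := Rmin (s / 2) (1 / (om + 1))).
  assert (Hd0 : 0 < d0) by (apply Rmin_pos; [lra|apply Rdiv_lt_0_compat; lra]).
  assert (Hd0s : d0 <= s / 2) by apply Rmin_l.
  assert (Hd0o : om * d0 <= 1).
  { assert (d0 <= 1 / (om + 1)) by apply Rmin_r.
    assert (om * d0 <= om * (1 / (om + 1))) by (apply Rmult_le_compat_l; lra).
    assert (om * (1 / (om + 1)) <= 1) by (apply (Rmult_le_reg_r (om + 1)); [lra|]; field_simplify; lra). lra. }
  set (tS := s - d0).
  assert (Hneg : forall t2, tS < t2 < s -> dx t2 <= 0).
  { intros t2 Ht2. destruct (Rle_or_lt (dx t2) 0) as [H|H]; auto. exfalso.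
    destruct (Hpos t2 ltac:(unfold tS in *; lra)) as [Hx2 _].
    destruct (cos_lb 0 ltac:(lra)) as [_ Hc1].
    apply (Hno t2 (x t2 * cos 1)). unfold tS in *; lra. apply Rmult_lt_0_compat; auto.
    intros t Ht. apply (sturm x dx f om t2 t); auto. lra.
    - assert (om * (t - t2) <= om * d0) by (apply Rmult_le_compat_l; unfold tS in *; lra). lra.
    - intros z Hz. destruct (Hder z ltac:(unfold tS in *; lra)) as [D1 [_ [D3 _]]].
      destruct (Hpos z ltac:(unfold tS in *; lra)) as [P1 [_ P3]]. rewrite Hom2. split; [exact D1|split; [exact D3|split; [exact P1|lra]]]. }
  set (t1 := (tS + s) / 2).
  assert (Ht1 : 0 < t1 < s /\ tS < t1) by (unfold t1, tS in *; lra).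
  assert (Hdec : forall u v, t1 <= u <= v -> v < s -> x v <= x u).
  { intros u v Huv Hv. cut (- x u <= - x v). lra.
    apply (mono_le (fun t => - x t) (fun t => - dx t) u v). lra.
    intros r Hr. apply dopp. apply (Hder r ltac:(lra)).
    intros r Hr. pose proof (Hneg r ltac:(lra)). lra. }
  assert (Hsmall : forall m, 0 < m -> exists sg, t1 < sg < s /\ x sg < m).
  { intros m Hm. apply NNPP. intros Hn. apply (Hno t1 m); [lra|auto|]. intros t Ht.
    destruct (Rle_or_lt m (x t)); auto. exfalso. apply Hn. exists t. split; auto. }
  set (Md := Rabs (dx t1) + a * x t1 * s + 1).
  assert (HMd : 1 <= Md).
  { unfold Md. pose proof (Rabs_pos (dx t1)). destruct (Hpos t1 ltac:(lra)) as [Hx1 _].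
    assert (0 <= a * x t1 * s) by (apply Rmult_le_pos; [apply Rmult_le_pos|]; lra). lra. }
  assert (Hdxb : forall t, t1 <= t < s -> - Md <= dx t <= 0).
  { intros t Ht. split; [|apply Hneg; lra].
    assert (dx t1 + a * x t1 * t1 <= dx t + a * x t1 * t).
    { apply (mono_le (fun r => dx r + a * x t1 * r) (fun r => f r * x r + a * x t1 * 1)). lra.
      intros r Hr. apply dplus. apply (Hder r ltac:(lra)). apply is_derive_scal. apply did.
      intros r Hr. destruct (Hpos r ltac:(lra)) as [Hxr [_ Hfr]]. pose proof (Hdec t1 r ltac:(lra) ltac:(lra)).
      assert ((f r + a) * x r >= 0) by (apply Rle_ge, Rmult_le_pos; lra). nra. }
    unfold Md. pose proof (Rle_abs (- dx t1)). rewrite Rabs_Ropp in H0. destruct (Hpos t1 ltac:(lra)) as [Hx1 _].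
    assert (a * x t1 * (t - t1) <= a * x t1 * s) by (apply Rmult_le_compat_l; [apply Rmult_le_pos|]; lra). nra. }
  assert (Hxb : forall t, t1 <= t < s -> x t <= Md * (s - t)).
  { intros t Ht. apply Rle_plus_epsilon. intros eps He.
    destruct (Hsmall eps He) as [sg [Hsg1 Hsg2]].
    set (t' := Rmax sg ((t + s) / 2)).
    assert (Ht' : sg <= t' /\ (t + s) / 2 <= t' /\ t' < s) by (unfold t'; split; [apply Rmax_l|split; [apply Rmax_r|apply Rmax_lub_lt; lra]]).
    assert (x t' <= x sg) by (apply Hdec; lra).
    assert (Hl : Rabs (x t' - x t) <= Md * (t' - t)).
    { apply (lip_of_deriv x dx t t' Md). lra. intros r Hr. apply (Hder r ltac:(lra)).
      intros r Hr. destruct (Hdxb r ltac:(lra)). apply Rabs_le. lra. }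
    apply abs_le_inv in Hl. assert (Md * (t' - t) <= Md * (s - t)) by (apply Rmult_le_compat_l; lra). lra. }
  set (g := fun t => y t / x t).
  assert (Hgd : forall t, 0 < t < s -> is_derive g t (c / (x t) ^ 2)).
  { intros t Ht. destruct (Hder t Ht) as [D1 [D2 _]]. destruct (Hpos t Ht) as [Hx _].
    apply (dext _ _ _ _ (is_derive_div _ _ _ _ _ D2 D1 ltac:(lra))). rewrite <- (Hw t Ht). field. lra. }
  assert (Hglb : forall t, t1 <= t < s -> g t1 - c / (Md * Md * (s - t1)) + c / (Md * Md * (s - t)) <= g t).
  { intros t Ht.
    assert (g t1 - c / (Md * Md * (s - t1)) <= g t - c / (Md * Md * (s - t))).
    { apply (mono_le (fun r => g r - c / (Md * Md * (s - r))) (fun r => c / (x r) ^ 2 - c / (Md * Md * (s - r) ^ 2)) t1 t). lra.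
      - intros r Hr. apply dminus. apply Hgd; lra.
        assert (Md * Md * (s - r) <> 0) by (apply Rgt_not_eq; apply Rmult_gt_0_compat; [nra|lra]).
        auto_derive. auto. field. lra.
      - intros r Hr. destruct (Hpos r ltac:(lra)) as [Hx _]. pose proof (Hxb r ltac:(lra)).
        assert (x r ^ 2 <= Md * Md * (s - r) ^ 2) by (simpl; nra).
        assert (/ (Md * Md * (s - r) ^ 2) <= / x r ^ 2) by (apply Rinv_le_contravar; auto; apply pow_lt; lra).
        unfold Rdiv. nra. }
    lra. }
  assert (Hginf : forall B, exists t0, t1 <= t0 < s /\ forall t, t0 <= t < s -> B <= g t).
  { intros B. set (E := B - g t1 + c / (Md * Md * (s - t1))).
    assert (HE : 0 < Rabs E + 1) by (pose proof (Rabs_pos E); lra).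
    set (r := c / (Md * Md * (Rabs E + 1))).
    assert (Hr : 0 < r) by (unfold r; apply Rdiv_lt_0_compat; [lra|apply Rmult_lt_0_compat; nra]).
    exists (Rmax t1 (s - r)). split. split. apply Rmax_l. apply Rmax_lub_lt; lra.
    intros t Ht. pose proof (Rmax_l t1 (s - r)). pose proof (Rmax_r t1 (s - r)).
    pose proof (Hglb t ltac:(lra)).
    assert (Rabs E + 1 <= c / (Md * Md * (s - t))).
    { assert (Md * Md * (s - t) <= Md * Md * r) by (apply Rmult_le_compat_l; nra).
      assert (Md * Md * r = c / (Rabs E + 1)) by (unfold r; field; split; lra).
      assert (0 < Md * Md * (s - t)) by (apply Rmult_lt_0_compat; nra).
      assert (Hinv : / (c / (Rabs E + 1)) <= / (Md * Md * (s - t))) by (apply Rinv_le_contravar; lra).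
      replace (/ (c / (Rabs E + 1))) with ((Rabs E + 1) / c) in Hinv by (field; lra).
      unfold Rdiv at 1. apply (Rmult_le_reg_r (/ c)). apply Rinv_0_lt_compat; lra.
      replace (c * / (Md * Md * (s - t)) * / c) with (/ (Md * Md * (s - t))) by (field; lra). exact Hinv. }
    pose proof (Rle_abs E). unfold E in *. lra. }
  exists t1. split; [lra|]. split.
  - set (H0 := x t1 * y t1 + c * s).
    assert (Hh : forall t, t1 <= t < s -> x t * y t <= H0).
    { intros t Ht. assert (c * t1 - x t1 * y t1 <= c * t - x t * y t).
      { apply (mono_le (fun r => c * r - x r * y r) (fun r => c * 1 - (dx r * y r + x r * dy r))). lra.
        intros r Hr. destruct (Hder r ltac:(lra)) as [D1 [D2 _]]. apply dminus. apply is_derive_scal. apply did. apply dmult; auto.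
        intros r Hr. pose proof (Hw r ltac:(lra)). destruct (Hdxb r ltac:(lra)). destruct (Hpos r ltac:(lra)) as [_ [Hy _]].
        assert (dx r * y r <= 0) by nra. lra. }
      unfold H0. assert (c * (t - t1) <= c * s) by (apply Rmult_le_compat_l; lra). nra. }
    assert (HH0 : 0 < H0) by (destruct (Hpos t1 ltac:(lra)) as [P1 [P2 _]]; unfold H0; assert (0 < x t1 * y t1) by (apply Rmult_lt_0_compat; auto); nra).
    set (m0 := Rmin (x t1 * dy t1) 0).
    assert (HX : forall t, t1 <= t < s -> m0 <= x t * dy t + a * H0 * (t - t1)).
    { intros t Ht. apply (barrier (fun r => x r * dy r + a * H0 * (r - t1))
          (fun r => dx r * dy r + x r * (f r * y r) + a * H0 * 1) t1 t m0). lra.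
      - intros r Hr. destruct (Hder r ltac:(lra)) as [D1 [D2 [_ D4]]]. apply dplus. apply dmult; auto.
        apply is_derive_scal. apply (dext _ _ _ _ (dminus _ _ _ _ _ (did r) (dconst t1 r))). ring.
      - intros r Hr Hlt. destruct (Hpos r ltac:(lra)) as [Px [Py Pf]]. destruct (Hdxb r ltac:(lra)).
        pose proof (Hh r ltac:(lra)).
        assert (0 <= a * H0 * (r - t1)) by (apply Rmult_le_pos; [nra|lra]).
        assert (Hm0 : m0 <= 0) by apply Rmin_r.
        assert (x r * dy r < 0) by lra.
        assert (dy r < 0) by (destruct (Rle_or_lt 0 (dy r)); [nra|auto]).
        assert (0 <= dx r * dy r) by nra.
        assert (0 < x r * y r) by (apply Rmult_lt_0_compat; auto).
        assert ((f r + a) * (x r * y r) >= 0) by (apply Rle_ge, Rmult_le_pos; lra).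
        assert (a * (H0 - x r * y r) >= 0) by (apply Rle_ge, Rmult_le_pos; lra).
        nra.
      - unfold m0. rewrite Rminus_diag, Rmult_0_r, Rplus_0_r. apply Rmin_l.
      - lra. }
    exists (Rabs m0 + a * H0 * s + c). intros t Ht.
    pose proof (HX t Ht). pose proof (Hw t ltac:(lra)). destruct (Hdxb t Ht). destruct (Hpos t ltac:(lra)) as [_ [Hy _]].
    assert (dx t * y t <= 0) by nra.
    assert (a * H0 * (t - t1) <= a * H0 * s) by (apply Rmult_le_compat_l; [nra|lra]).
    pose proof (Rle_abs (- m0)). rewrite Rabs_Ropp in H6.
    apply Rabs_le. split; [|pose proof (Rabs_pos m0); nra]. nra.
  - intros eps He.
    set (te := Rmax t1 (s - eps / (4 * c))).
    assert (Hte : t1 <= te < s /\ s - eps / (4 * c) <= te).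
    { unfold te. split. split. apply Rmax_l. apply Rmax_lub_lt. lra. assert (0 < eps / (4 * c)) by (apply Rdiv_lt_0_compat; lra). lra. apply Rmax_r. }
    destruct (Hginf (2 * g te)) as [t0 [Ht0 Hg0]].
    exists (Rmax t0 te). split. split. pose proof (Rmax_r t0 te). lra. apply Rmax_lub_lt; lra.
    intros t Ht. pose proof (Rmax_l t0 te). pose proof (Rmax_r t0 te).
    destruct (Hpos t ltac:(lra)) as [Hxt [Hyt _]]. destruct (Hpos te ltac:(lra)) as [Hxe [Hye _]].
    assert (Hgte : 0 < g te) by (unfold g; apply Rdiv_lt_0_compat; auto).
    pose proof (Hg0 t ltac:(lra)).
    assert (te - (x t) ^ 2 / c * g te <= t - (x t) ^ 2 / c * g t).
    { apply (mono_le (fun r => r - (x t) ^ 2 / c * g r) (fun r => 1 - (x t) ^ 2 / c * (c / (x r) ^ 2)) te t). lra.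
      - intros r Hr. apply dminus. apply did. apply is_derive_scal. apply Hgd; lra.
      - intros r Hr. destruct (Hpos r ltac:(lra)) as [Hxr _]. pose proof (Hdec r t ltac:(lra) ltac:(lra)).
        replace ((x t) ^ 2 / c * (c / (x r) ^ 2)) with ((x t) ^ 2 / (x r) ^ 2) by (field; lra).
        assert ((x t) ^ 2 <= (x r) ^ 2) by (simpl; nra).
        assert ((x t) ^ 2 / (x r) ^ 2 <= 1). { apply (Rmult_le_reg_r ((x r)^2)). apply pow_lt; lra.
          field_simplify; [lra|lra]. } lra. }
    assert (Hxy : x t * y t = (x t) ^ 2 * g t) by (unfold g; field; lra).
    rewrite Hxy.
    assert ((x t) ^ 2 / c * (g t - g te) <= eps / (4 * c)) by lra.
    assert ((x t) ^ 2 * (g t - g te) <= eps / 4).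
    { apply (Rmult_le_reg_r (/ c)). apply Rinv_0_lt_compat; lra.
      replace ((x t) ^ 2 * (g t - g te) * / c) with ((x t) ^ 2 / c * (g t - g te)) by (field; lra).
      replace (eps / 4 * / c) with (eps / (4 * c)) by (field; lra). exact H3. }
    assert (0 <= (x t) ^ 2) by (apply pow_le; lra).
    assert ((x t) ^ 2 * (g t / 2) <= (x t) ^ 2 * (g t - g te)) by (apply Rmult_le_compat_l; lra).
    lra.
Qed.

Theorem corollary3p3 (n J : nat) (k cb rho0 tB : R) (lam0 : nat -> R)
    (lam : nat -> R -> R) (rho : R -> R) :
  (2 <= n)%nat -> 0 < k -> 0 < cb -> 0 < rho0 ->
  (1 <= J <= n)%nat ->
  (forall i, (1 <= i <= J)%nat -> lam0 i = lam0 1%nat) ->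
  ((J < n)%nat -> lam0 J < lam0 (S J)) ->
  (forall i, (J < i < n)%nat -> lam0 i <= lam0 (S i)) ->
  0 < tB ->
  maximal_sol n k cb rho0 lam0 tB lam rho ->
  forall j, (J < j <= n)%nat ->
    bounded_on_0_tB tB (fun t => Derive (u lam 1%nat) t * u lam j t) /\
    bounded_on_0_tB tB (fun t => u lam 1%nat t * Derive (u lam j) t) /\
    filterlim (fun t => u lam 1%nat t * u lam j t) (at_left tB) (locally 0).
Proof.
  intros Hn Hk Hcb Hr0 HJ Heq Hgap Hmono HtB Hmax j Hj.
  pose proof Hmax as [Hsol _].
  destruct (lam0_order n J lam0 HJ Heq Hgap Hmono) as [Hord Hgt].
  assert (Hn1 : (1 <= n)%nat) by lia. assert (Hj1 : (1 <= j <= n)%nat) by lia. assert (H11 : (1 <= 1 <= n)%nat) by lia.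
  assert (HnR : 0 < INR n) by (apply lt_0_INR; lia).
  assert (Hka : 0 < k / INR n) by (apply Rdiv_lt_0_compat; auto).
  assert (Hc : 0 < lam0 j - lam0 1%nat) by (pose proof (Hgt j Hj); lra).
  assert (HW : forall t, 0 <= t < tB -> ut lam0 lam 1 t * dut lam0 lam j t - dut lam0 lam 1 t * ut lam0 lam j t = lam0 j - lam0 1%nat).
  { intros t Ht. rewrite <- (wronsk n k cb rho0 lam0 tB lam rho 1 j Hsol HtB H11 Hj1 t Ht). unfold dut. ring. }
  destruct (analysis (ut lam0 lam 1) (dut lam0 lam 1) (ut lam0 lam j) (dut lam0 lam j)
             (fun t => k / INR n * (rho t - cb)) tB (k / INR n * cb) (lam0 j - lam0 1%nat))
     as [t1 [Ht1 [[B HB] Hlim]]].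
  - exact HtB.
  - apply Rmult_lt_0_compat; auto.
  - exact Hc.
  - intros t Ht. split; [|split; [|split]].
    + apply (ut_der n k cb rho0 lam0 tB lam rho 1 Hsol HtB H11 t ltac:(lra)).
    + apply (ut_der n k cb rho0 lam0 tB lam rho j Hsol HtB Hj1 t ltac:(lra)).
    + apply (dut_der n k cb rho0 lam0 tB lam rho 1 Hsol HtB H11 t Ht).
    + apply (dut_der n k cb rho0 lam0 tB lam rho j Hsol HtB Hj1 t Ht).
  - intros t Ht. split; [apply ut_pos|split; [apply ut_pos|]].
    pose proof (rho_pos n k cb rho0 lam0 tB lam rho Hsol HtB Hn1 Hr0 t Ht).
    assert (0 < k / INR n * rho t) by (apply Rmult_lt_0_compat; auto). nra.
  - intros t Ht. apply HW. lra.
  - intros t0 m Ht0 Hm Hlow. apply (no_lower n k cb rho0 lam0 tB lam rho Hmax HtB Hn1 Hk Hcb Hr0 Hord t0 m Ht0 Hm Hlow).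
  - set (Yf := fun t => dut lam0 lam 1 t * ut lam0 lam j t).
    assert (HYc : forall t, 0 <= t <= t1 -> continuity_pt Yf t).
    { intros t Ht. apply continuity_pt_filterlim. change (continuous Yf t). unfold Yf, dut. apply cmult. apply cmult.
      apply (gg_cont n k cb rho0 lam0 tB lam rho 1 Hsol H11); lra.
      apply (ut_cont n k cb rho0 lam0 tB lam rho 1 Hsol HtB H11); lra.
      apply (ut_cont n k cb rho0 lam0 tB lam rho j Hsol HtB Hj1); lra. }
    destruct (continuity_ab_maj Yf 0 t1 ltac:(lra) HYc) as [Mx [HMx _]].
    destruct (continuity_ab_min Yf 0 t1 ltac:(lra) HYc) as [mx [Hmx _]].
    assert (HYb : forall t, 0 < t < tB -> Rabs (Yf t) <= B + Rabs (Yf Mx) + Rabs (Yf mx)).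
    { intros t Ht. pose proof (Rabs_pos (Yf Mx)). pose proof (Rabs_pos (Yf mx)).
      destruct (Rle_or_lt t t1) as [Hle|Hlt].
      - pose proof (HMx t ltac:(lra)). pose proof (Hmx t ltac:(lra)).
        pose proof (HB t1 ltac:(lra)). pose proof (Rabs_pos (dut lam0 lam 1 t1 * ut lam0 lam j t1)).
        apply Rabs_le. pose proof (Rle_abs (Yf Mx)). pose proof (Rle_abs (- Yf mx)) as Hm7. rewrite Rabs_Ropp in Hm7. lra.
      - assert (Rabs (Yf t) <= B) by exact (HB t ltac:(lra)). lra. }
    assert (HD1 : forall t, 0 < t < tB -> Derive (u lam 1) t * u lam j t = Yf t).
    { intros t Ht. rewrite (Derive_u n k cb rho0 lam0 tB lam rho 1 Hsol HtB H11 t Ht). rewrite (u_eq lam0) by lra. reflexivity. }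
    assert (HD2 : forall t, 0 < t < tB -> u lam 1 t * Derive (u lam j) t = Yf t + (lam0 j - lam0 1%nat)).
    { intros t Ht. rewrite (Derive_u n k cb rho0 lam0 tB lam rho j Hsol HtB Hj1 t Ht). rewrite (u_eq lam0) by lra.
      unfold Yf. rewrite <- (HW t ltac:(lra)). ring. }
    split; [|split].
    + exists (B + Rabs (Yf Mx) + Rabs (Yf mx) + Rabs (Derive (u lam 1) 0 * u lam j 0)).
      intros t Ht. pose proof (Rabs_pos (Derive (u lam 1) 0 * u lam j 0)).
      destruct (Req_dec t 0) as [->|Hne]. 
      * pose proof (Rabs_pos (Yf Mx)). pose proof (Rabs_pos (Yf mx)). pose proof (HB t1 ltac:(lra)).
        pose proof (Rabs_pos (dut lam0 lam 1 t1 * ut lam0 lam j t1)). lra.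
      * rewrite HD1 by lra. pose proof (HYb t ltac:(lra)). lra.
    + exists (B + Rabs (Yf Mx) + Rabs (Yf mx) + (lam0 j - lam0 1%nat) + Rabs (u lam 1 0 * Derive (u lam j) 0)).
      intros t Ht. pose proof (Rabs_pos (u lam 1 0 * Derive (u lam j) 0)).
      destruct (Req_dec t 0) as [->|Hne].
      * pose proof (Rabs_pos (Yf Mx)). pose proof (Rabs_pos (Yf mx)). pose proof (HB t1 ltac:(lra)).
        pose proof (Rabs_pos (dut lam0 lam 1 t1 * ut lam0 lam j t1)). lra.
      * rewrite HD2 by lra. pose proof (HYb t ltac:(lra)).
        eapply Rle_trans. apply Rabs_triang. rewrite (Rabs_right (lam0 j - lam0 1%nat)) by lra. lra.
    + apply (proj2 (filterlim_locally _ _)). intros eps.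
      destruct (Hlim eps (cond_pos eps)) as [tau [Htau Hl]].
      exists (mkposreal (tB - tau) ltac:(lra)). intros y Hy Hy2.
      change (Rabs (y - tB) < tB - tau) in Hy. apply abs_lt_inv in Hy.
      change (Rabs (u lam 1 y * u lam j y - 0) < eps).
      rewrite (u_eq lam0 lam 1 y) by lra. rewrite (u_eq lam0 lam j y) by lra.
      rewrite Rminus_0_r. rewrite Rabs_right. apply Hl. lra.
      apply Rle_ge. apply Rmult_le_pos; left; apply ut_pos.
Qed.
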